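(* Let $T$ be a triangle, $j\ge0$ an integer, and $v=\{v_0,v_b\}$ with $v_0\in P_j(T)$ and $v_b\in P_{j+1}(\partial T)$. Let $\nabla_{d,j+1}v\in[P_{j+1}(T)]^2$ be the discrete weak gradient of $v$ defined with $V(T)=[P_{j+1}(T)]^2$. Then $\nabla_{d,j+1}v=0$ on $T$ if and only if $v$ is constant, i.e. $v_0=v_b=$ the same constant.
   Context: $P_j(T)$ denotes polynomials of degree $\le j$ on $T$; $P_{j+1}(\partial T)$ denotes functions on $\partial T$ whose restriction to each edge of $T$ is a polynomial of degree $\le j+1$. The discrete weak gradient $\nabla_{d,j+1}v$ is the unique element of $[P_{j+1}(T)]^2$ with $\int_T\nabla_{d,j+1}v\cdot q\,dT=-\int_Tv_0\,\nabla\cdot q\,dT+\int_{\partial T}v_b\,q\cdot\mathbf{n}\,ds$ for all $q\in[P_{j+1}(T)]^2$, where $\mathbf{n}$ is the outward unit normal to $\partial T$. *)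

(* Defs.v *)
From Stdlib Require Import Reals.
From Coquelicot Require Import Coquelicot.
Open Scope R_scope.

Definition pt := (R * R)%type.

Definition det2 (u v : pt) : R := fst u * snd v - snd u * fst v.
Definition psub (p q : pt) : pt := (fst p - fst q, snd p - snd q).

Definition lerp (p q : pt) (t : R) : pt :=
  (fst p + t * (fst q - fst p), snd p + t * (snd q - snd p)).

Definition tri_pt (a b c : pt) (s t : R) : pt :=
  (fst a + s * (fst b - fst a) + t * (fst c - fst a),
   snd a + s * (snd b - snd a) + t * (snd c - snd a)).

Definition nondegenerate (a b c : pt) : Prop := det2 (psub b a) (psub c a) <> 0.

Definition in_tri (a b c : pt) (x : pt) : Prop :=
  exists s t, 0 <= s /\ 0 <= t /\ s + t <= 1 /\ x = tri_pt a b c s t.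

Definition on_seg (p q : pt) (x : pt) : Prop :=
  exists t, 0 <= t <= 1 /\ x = lerp p q t.

Definition on_bdry (a b c : pt) (x : pt) : Prop :=
  on_seg a b x \/ on_seg b c x \/ on_seg c a x.

Definition poly2 (j : nat) (f : R -> R -> R) : Prop :=
  exists cf : nat -> nat -> R, forall x y,
    f x y = sum_f_R0 (fun k => sum_f_R0 (fun l =>
              if (k + l <=? j)%nat then cf k l * x ^ k * y ^ l else 0) j) j.

Definition poly1_on01 (n : nat) (g : R -> R) : Prop :=
  exists cf : nat -> R, forall t, 0 <= t <= 1 ->
    g t = sum_f_R0 (fun k => cf k * t ^ k) n.

Definition edge_poly (n : nat) (vb : R -> R -> R) (p q : pt) : Prop :=
  poly1_on01 n (fun t => vb (fst (lerp p q t)) (snd (lerp p q t))).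

Definition bdry_poly (n : nat) (vb : R -> R -> R) (a b c : pt) : Prop :=
  edge_poly n vb a b /\ edge_poly n vb b c /\ edge_poly n vb c a.

(* integral over T via the affine parametrization (change of variables) *)
Definition tri_int (a b c : pt) (f : R -> R -> R) : R :=
  Rabs (det2 (psub b a) (psub c a)) *
  RInt (fun s => RInt (fun t => f (fst (tri_pt a b c s t)) (snd (tri_pt a b c s t)))
                      0 (1 - s)) 0 1.

Definition seg_len (p q : pt) : R :=
  sqrt ((fst q - fst p) ^ 2 + (snd q - snd p) ^ 2).

(* line integral (w.r.t. arclength ds) over the edge [p,q] *)
Definition seg_int (p q : pt) (g : R -> R -> R) : R :=
  seg_len p q * RInt (fun t => g (fst (lerp p q t)) (snd (lerp p q t))) 0 1.

(* outward unit normal of the edge [p,q] of the triangle whose third vertex is r *)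
Definition out_normal (p q r : pt) : pt :=
  let m := (snd q - snd p, fst p - fst q) in
  let sg := if Rlt_dec 0 (fst m * (fst r - fst p) + snd m * (snd r - snd p))
            then -1 else 1 in
  (sg * fst m / seg_len p q, sg * snd m / seg_len p q).

Definition edge_flux (p q r : pt) (vb q1 q2 : R -> R -> R) : R :=
  let n := out_normal p q r in
  seg_int p q (fun x y => vb x y * (q1 x y * fst n + q2 x y * snd n)).

Definition bdry_flux (a b c : pt) (vb q1 q2 : R -> R -> R) : R :=
  edge_flux a b c vb q1 q2 + edge_flux b c a vb q1 q2 + edge_flux c a b vb q1 q2.

Definition div2 (q1 q2 : R -> R -> R) (x y : R) : R :=
  Derive (fun x' => q1 x' y) x + Derive (fun y' => q2 x y') y.

Definition is_weak_grad (j : nat) (a b c : pt) (v0 vb w1 w2 : R -> R -> R) : Prop :=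
  poly2 (S j) w1 /\ poly2 (S j) w2 /\
  forall q1 q2 : R -> R -> R, poly2 (S j) q1 -> poly2 (S j) q2 ->
    tri_int a b c (fun x y => w1 x y * q1 x y + w2 x y * q2 x y)
    = - tri_int a b c (fun x y => v0 x y * div2 q1 q2 x y)
      + bdry_flux a b c vb q1 q2.

(* Main.v *)
Require Import Defs.
From Stdlib Require Import Reals Lra Lia List.
From Coquelicot Require Import Coquelicot.
Import ListNotations.
Open Scope R_scope.

Definition mono := (R * nat * nat)%type.
Fixpoint ev (L : list mono) (s t : R) : R :=
  match L with nil => 0 | (c,k,l)::L' => c * s^k * t^l + ev L' s t end.
Definition degok (n : nat) (L : list mono) : Prop :=
  forall c k l, In (c,k,l) L -> (k + l <= n)%nat.

Lemma degok_nil n : degok n [].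
Proof. intros c k l H; destruct H. Qed.
Lemma degok_cons n c k l L : (k + l <= n)%nat -> degok n L -> degok n ((c,k,l)::L).
Proof. intros H1 H2 c' k' l' [E|E]; [inversion E; subst; auto | eauto]. Qed.
Lemma degok_app n A B : degok n A -> degok n B -> degok n (A ++ B).
Proof. intros HA HB c k l H; apply in_app_or in H; destruct H; eauto. Qed.
Lemma degok_mono m n L : degok m L -> (m <= n)%nat -> degok n L.
Proof. intros H Hmn c k l Hi; specialize (H c k l Hi); lia. Qed.

Lemma ev_app A B s t : ev (A ++ B) s t = ev A s t + ev B s t.
Proof. induction A as [|[[c k] l] A IH]; simpl; [ring| rewrite IH; ring]. Qed.

Definition scaleL (r : R) (L : list mono) : list mono :=
  map (fun m => match m with (c,k,l) => (r*c,k,l) end) L.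
Lemma ev_scaleL r L s t : ev (scaleL r L) s t = r * ev L s t.
Proof. induction L as [|[[c k] l] L IH]; simpl; [ring| rewrite IH; ring]. Qed.
Lemma degok_scaleL n r L : degok n L -> degok n (scaleL r L).
Proof.
  intros H c k l Hi. unfold scaleL in Hi. apply in_map_iff in Hi.
  destruct Hi as [[[c' k'] l'] [E Hi]]. inversion E; subst. eauto.
Qed.

Definition mulM (m1 m2 : mono) : mono :=
  match m1, m2 with (c,k,l), (c',k',l') => (c*c', (k+k')%nat, (l+l')%nat) end.
Definition mulL (A B : list mono) : list mono :=
  flat_map (fun m => map (mulM m) B) A.
Lemma ev_map_mulM c k l B s t :
  ev (map (mulM (c,k,l)) B) s t = c * s^k * t^l * ev B s t.
Proof.
  induction B as [|[[c' k'] l'] B IH]; simpl; [ring|].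
  rewrite IH, !pow_add; ring.
Qed.
Lemma ev_mulL A B s t : ev (mulL A B) s t = ev A s t * ev B s t.
Proof.
  induction A as [|[[c k] l] A IH]; simpl; [ring|].
  fold (mulL A B). rewrite ev_app, ev_map_mulM, IH; ring.
Qed.
Lemma degok_mulL m n A B : degok m A -> degok n B -> degok (m + n) (mulL A B).
Proof.
  intros HA HB c k l Hi. unfold mulL in Hi. apply in_flat_map in Hi.
  destruct Hi as [[[c1 k1] l1] [H1 H2]]. apply in_map_iff in H2.
  destruct H2 as [[[c2 k2] l2] [E H2]]. simpl in E. inversion E; subst.
  specialize (HA _ _ _ H1); specialize (HB _ _ _ H2); lia.
Qed.

Fixpoint powL (A : list mono) (k : nat) : list mono :=
  match k with O => [(1,O,O)] | S k' => mulL A (powL A k') end.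
Lemma ev_powL A k s t : ev (powL A k) s t = (ev A s t) ^ k.
Proof. induction k; simpl; [ring| rewrite ev_mulL, IHk; ring]. Qed.
Lemma degok_powL A k : degok 1 A -> degok k (powL A k).
Proof.
  intros HA; induction k; simpl.
  - apply degok_cons; [lia| apply degok_nil].
  - apply (degok_mulL 1 k); auto.
Qed.

Definition compL (L A B : list mono) : list mono :=
  flat_map (fun m => match m with (c,k,l) => scaleL c (mulL (powL A k) (powL B l)) end) L.
Lemma ev_compL L A B s t : ev (compL L A B) s t = ev L (ev A s t) (ev B s t).
Proof.
  induction L as [|[[c k] l] L IH]; simpl; [ring|].
  fold (compL L A B). rewrite ev_app, ev_scaleL, ev_mulL, !ev_powL, IH; ring.
Qed.
Lemma degok_compL n L A B : degok n L -> degok 1 A -> degok 1 B -> degok n (compL L A B).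
Proof.
  intros HL HA HB c k l Hi. unfold compL in Hi. apply in_flat_map in Hi.
  destruct Hi as [[[c1 k1] l1] [H1 H2]].
  assert (Hd := degok_scaleL _ c1 _ (degok_mulL _ _ _ _ (degok_powL A k1 HA) (degok_powL B l1 HB))).
  specialize (Hd _ _ _ H2). specialize (HL _ _ _ H1). lia.
Qed.

Lemma isd_eq (f : R -> R) (x l l' : R) : is_derive f x l -> l = l' -> is_derive f x l'.
Proof. intros H ->; exact H. Qed.
Lemma isd_plus (f g : R -> R) (x df dg : R) : is_derive f x df -> is_derive g x dg -> is_derive (fun x => f x + g x) x (df + dg).
Proof. intros; apply (is_derive_plus f g); auto. Qed.
Lemma isd_mult (f g : R -> R) (x df dg : R) : is_derive f x df -> is_derive g x dg -> is_derive (fun x => f x * g x) x (df * g x + f x * dg).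
Proof. intros. apply (is_derive_mult f g); auto. intros; apply Rmult_comm. Qed.
Lemma cont_of_derive (f : R -> R) (x l : R) : is_derive f x l -> continuous f x.
Proof. intros H. apply (ex_derive_continuous f x). exists l; exact H. Qed.
Lemma isd_const c x : is_derive (fun _ : R => c) x 0.
Proof. auto_derive; try exact I; ring. Qed.
Lemma isd_lin (a u x : R) : is_derive (fun h => a + h * u) x u.
Proof. auto_derive; try exact I; ring. Qed.
Lemma isd_pow (f : R -> R) n (x l : R) : is_derive f x l -> is_derive (fun x => f x ^ n) x (INR n * l * f x ^ pred n).
Proof. apply is_derive_pow. Qed.

Definition dsM (m : mono) : mono :=
  match m with (c,k,l) => match k with O => (0,O,O) | S k' => (c * INR (S k'), k', l) end end.
Definition dtM (m : mono) : mono :=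
  match m with (c,k,l) => match l with O => (0,O,O) | S l' => (c * INR (S l'), k, l') end end.
Definition dsL L := map dsM L.
Definition dtL L := map dtM L.
Definition intM (m : mono) : mono :=
  match m with (c,k,l) => (c / INR (S l), k, S l) end.
Definition intL L := map intM L.

Lemma degok_dsL n L : degok (S n) L -> degok n (dsL L).
Proof.
  intros H c k l Hi. unfold dsL in Hi. apply in_map_iff in Hi.
  destruct Hi as [[[c' k'] l'] [E Hi]]. specialize (H _ _ _ Hi).
  destruct k'; simpl in E; inversion E; subst; lia.
Qed.
Lemma degok_dtL n L : degok (S n) L -> degok n (dtL L).
Proof.
  intros H c k l Hi. unfold dtL in Hi. apply in_map_iff in Hi.
  destruct Hi as [[[c' k'] l'] [E Hi]]. specialize (H _ _ _ Hi).
  destruct l'; simpl in E; inversion E; subst; lia.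
Qed.
Lemma degok_intL n L : degok n L -> degok (S n) (intL L).
Proof.
  intros H c k l Hi. unfold intL in Hi. apply in_map_iff in Hi.
  destruct Hi as [[[c' k'] l'] [E Hi]]. specialize (H _ _ _ Hi).
  simpl in E; inversion E; subst; lia.
Qed.

Lemma line_derive L s0 u t0 v x :
  is_derive (fun h => ev L (s0 + h*u) (t0 + h*v)) x
    (u * ev (dsL L) (s0 + x*u) (t0 + x*v) + v * ev (dtL L) (s0 + x*u) (t0 + x*v)).
Proof.
  induction L as [|[[c k] l] L IH]; simpl.
  - eapply isd_eq. apply isd_const. ring.
  - eapply isd_eq.
    + apply (isd_plus (fun h => c * (s0 + h*u)^k * (t0 + h*v)^l)); [|exact IH].
      apply isd_mult; [|apply isd_pow, isd_lin].
      apply (isd_mult (fun _ => c)); [apply isd_const| apply isd_pow, isd_lin].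
    + fold (dsL L) (dtL L).
      destruct k as [|k]; destruct l as [|l]; simpl; ring.
Qed.

Lemma line_cont L s0 u t0 v x :
  continuous (fun h => ev L (s0 + h*u) (t0 + h*v)) x.
Proof. eapply cont_of_derive. apply line_derive. Qed.

Lemma ev_dt_int L s t : ev (dtL (intL L)) s t = ev L s t.
Proof.
  unfold dtL, dsL, intL in *.
  induction L as [|[[c k] l] L IH]; cbn -[INR]; [ring|].
  rewrite IH. field. apply not_0_INR; lia.
Qed.
Lemma ev_ds_int L s t : ev (dsL (intL L)) s t = ev (intL (dsL L)) s t.
Proof.
  unfold dtL, dsL, intL in *.
  induction L as [|[[c k] l] L IH]; cbn -[INR]; [ring|].
  rewrite IH. destruct k; cbn -[INR]; field; apply not_0_INR; lia.
Qed.
Lemma ev_int_t0 L s : ev (intL L) s 0 = 0.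
Proof. unfold intL in *. induction L as [|[[c k] l] L IH]; cbn -[INR]; [ring|]. rewrite IH; ring. Qed.
Lemma ev_int_dt L s t : ev (intL (dtL L)) s t = ev L s t - ev L s 0.
Proof.
  unfold dtL, dsL, intL in *.
  induction L as [|[[c k] l] L IH]; cbn -[INR]; [ring|].
  rewrite IH. destruct l; cbn -[INR]; field; apply not_0_INR; lia.
Qed.

Lemma is_RInt_t L s u : is_RInt (fun t => ev L s t) 0 u (ev (intL L) s u).
Proof.
  set (F := fun t => ev (intL L) (s + t*0) (0 + t*1)).
  assert (E : ev (intL L) s u = minus (F u) (F 0)).
  { unfold F. replace (s + u*0) with s by ring. replace (0+u*1) with u by ring.
    replace (s + 0*0) with s by ring. replace (0+0*1) with 0 by ring.
    rewrite ev_int_t0. unfold minus, plus, opp; simpl. ring. }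
  rewrite E. apply (is_RInt_ext (fun t => ev L (s + t*0) (0 + t*1))).
  { intros; f_equal; ring. }
  apply (is_RInt_derive F).
  - intros x _. eapply isd_eq. apply line_derive.
    rewrite ev_dt_int; ring.
  - intros; apply line_cont.
Qed.

Lemma RI_plus (f g : R -> R) a b : ex_RInt f a b -> ex_RInt g a b ->
  RInt (fun x => f x + g x) a b = RInt f a b + RInt g a b.
Proof. intros. apply (RInt_plus f g); auto. Qed.
Lemma RI_minus (f g : R -> R) a b : ex_RInt f a b -> ex_RInt g a b ->
  RInt (fun x => f x - g x) a b = RInt f a b - RInt g a b.
Proof. intros. apply (RInt_minus f g); auto. Qed.
Lemma RI_scal (f : R -> R) k a b : ex_RInt f a b ->
  RInt (fun x => k * f x) a b = k * RInt f a b.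
Proof. intros. apply (RInt_scal f); auto. Qed.
Lemma RI_opp (f : R -> R) a b : ex_RInt f a b ->
  RInt (fun x => - f x) a b = - RInt f a b.
Proof. intros. apply (RInt_opp f); auto. Qed.
Lemma exR_plus (f g : R -> R) a b : ex_RInt f a b -> ex_RInt g a b -> ex_RInt (fun x => f x + g x) a b.
Proof. intros; apply (ex_RInt_plus f g); auto. Qed.
Lemma exR_minus (f g : R -> R) a b : ex_RInt f a b -> ex_RInt g a b -> ex_RInt (fun x => f x - g x) a b.
Proof. intros; apply (ex_RInt_minus f g); auto. Qed.
Lemma exR_ext (f g : R -> R) a b : (forall x, Rmin a b < x < Rmax a b -> f x = g x) -> ex_RInt f a b -> ex_RInt g a b.
Proof. apply ex_RInt_ext. Qed.
Lemma RI_ext (f g : R -> R) a b : (forall x, Rmin a b < x < Rmax a b -> f x = g x) -> RInt f a b = RInt g a b.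
Proof. apply RInt_ext. Qed.
Lemma RI_unique (f : R -> R) a b (l : R) : is_RInt f a b l -> RInt f a b = l.
Proof. intros H. exact (is_RInt_unique (V:=R_CompleteNormedModule) f a b l H). Qed.
Lemma FTC (f df : R -> R) a b : (forall x, Rmin a b <= x <= Rmax a b -> is_derive f x (df x)) ->
  (forall x, Rmin a b <= x <= Rmax a b -> continuous df x) -> RInt df a b = f b - f a.
Proof. intros H1 H2. apply RI_unique. exact (is_RInt_derive f df a b H1 H2). Qed.
Lemma RI_zero a b : RInt (fun _ => 0) a b = 0.
Proof. rewrite RInt_const. unfold scal; simpl; unfold mult; simpl. ring. Qed.

Lemma RI_flip (g : R -> R) : ex_RInt g 0 1 -> RInt (fun t => g (1 - t)) 0 1 = RInt g 0 1.
Proof.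
  intros H.
  assert (H1 : ex_RInt g (-1 * 0 + 1) (-1 * 1 + 1)).
  { replace (-1*0+1) with 1 by ring. replace (-1*1+1) with 0 by ring.
    apply ex_RInt_swap; exact H. }
  assert (E := RInt_comp_lin g (-1) 1 0 1 H1).
  replace (-1*0+1) with 1 in E by ring. replace (-1*1+1) with 0 in E by ring.
  rewrite <- (opp_RInt_swap g 0 1 H) in E.
  match type of E with ?X = _ => assert (E2 : X = - RInt (fun t => g (1 - t)) 0 1) end.
  { rewrite <- RI_opp.
    - apply RInt_ext. intros x _. unfold scal; simpl; unfold mult; simpl.
      replace (-1 * x + 1) with (1 - x) by ring. ring.
    - assert (H2 := ex_RInt_comp_lin g (-1) 1 0 1 H1).
      apply (ex_RInt_ext _ _ _ _ (fun x _ => eq_refl)) in H2.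
      assert (H3 := ex_RInt_scal _ 0 1 (-1) H2).
      eapply ex_RInt_ext; [|exact H3]. intros x _. unfold scal; simpl; unfold mult; simpl.
      replace (-1 * x + 1) with (1 - x) by ring. ring. }
  rewrite E2 in E. unfold opp in E; simpl in E. lra.
Qed.

Lemma exR_cont (f : R -> R) a b : (forall z, Rmin a b <= z <= Rmax a b -> continuous f z) -> ex_RInt f a b.
Proof. intros H. exact (ex_RInt_continuous (V:=R_CompleteNormedModule) f a b H). Qed.
Lemma exR_line L a1 b1 a2 b2 lo hi :
  ex_RInt (fun h => ev L (a1 + h*b1) (a2 + h*b2)) lo hi.
Proof. apply exR_cont. intros; apply line_cont. Qed.

Ltac lin_ext := let x := fresh in intros x; f_equal; ring.

Lemma exR_s_1ms L lo hi : ex_RInt (fun s => ev L s (1 - s)) lo hi.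
Proof. eapply exR_ext; [|apply (exR_line L 0 1 1 (-1))]. intros; simpl; f_equal; ring. Qed.
Lemma exR_s_0 L lo hi : ex_RInt (fun s => ev L s 0) lo hi.
Proof. eapply exR_ext; [|apply (exR_line L 0 1 0 0)]. intros; simpl; f_equal; ring. Qed.
Lemma exR_0_s L lo hi : ex_RInt (fun s => ev L 0 s) lo hi.
Proof. eapply exR_ext; [|apply (exR_line L 0 0 0 1)]. intros; simpl; f_equal; ring. Qed.
Lemma exR_1ms_s L lo hi : ex_RInt (fun s => ev L (1 - s) s) lo hi.
Proof. eapply exR_ext; [|apply (exR_line L 1 (-1) 0 1)]. intros; simpl; f_equal; ring. Qed.
Lemma exR_0_1ms L lo hi : ex_RInt (fun s => ev L 0 (1 - s)) lo hi.
Proof. eapply exR_ext; [|apply (exR_line L 0 0 1 (-1))]. intros; simpl; f_equal; ring. Qed.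

Definition DI L : R := RInt (fun s => RInt (fun t => ev L s t) 0 (1 - s)) 0 1.
Definition Bbc H : R := RInt (fun t => ev H (1 - t) t) 0 1.
Definition Bab H : R := RInt (fun t => ev H t 0) 0 1.
Definition Bca H : R := RInt (fun t => ev H 0 (1 - t)) 0 1.

Lemma DI_closed L : DI L = RInt (fun s => ev (intL L) s (1 - s)) 0 1.
Proof. unfold DI. apply RI_ext. intros x _. apply is_RInt_unique, is_RInt_t. Qed.

Lemma DI_app A B : DI (A ++ B) = DI A + DI B.
Proof.
  rewrite !DI_closed. unfold intL. rewrite map_app. fold (intL A) (intL B).
  rewrite <- RI_plus by apply exR_s_1ms.
  apply RI_ext. intros; apply ev_app.
Qed.
Lemma DI_scale r A : DI (scaleL r A) = r * DI A.
Proof.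
  unfold DI. rewrite <- RI_scal.
  - apply RI_ext. intros x _. rewrite <- RI_scal.
    + apply RI_ext; intros; apply ev_scaleL.
    + eexists; apply is_RInt_t.
  - eapply exR_ext; [|apply (exR_s_1ms (intL A))]. intros x _. symmetry.
    apply is_RInt_unique, is_RInt_t.
Qed.
Lemma DI_ext A B : (forall s t, 0 < s < 1 -> 0 < t < 1 - s -> ev A s t = ev B s t) -> DI A = DI B.
Proof.
  intros H. unfold DI. apply RI_ext. intros s Hs.
  rewrite Rmin_left in Hs by lra. rewrite Rmax_right in Hs by lra.
  apply RI_ext. intros t Ht.
  rewrite Rmin_left in Ht by lra. rewrite Rmax_right in Ht by lra. apply H; lra.
Qed.
Lemma DI_nil : DI [] = 0.
Proof. unfold DI. simpl. rewrite (RI_ext _ (fun _ => 0)). apply RI_zero. intros; apply RI_zero. Qed.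

Lemma IBP_t H : DI (dtL H) = Bbc H - Bab H.
Proof.
  rewrite DI_closed.
  transitivity (RInt (fun s => ev H s (1 - s) - ev H s 0) 0 1).
  { apply RI_ext; intros; apply ev_int_dt. }
  rewrite RI_minus; [| apply exR_s_1ms | apply exR_s_0].
  unfold Bbc, Bab. f_equal.
  rewrite <- (RI_flip (fun s => ev H s (1 - s))); [| apply exR_s_1ms].
  apply RI_ext; intros; simpl; f_equal; ring.
Qed.

Lemma IBP_s H : DI (dsL H) = Bbc H - Bca H.
Proof.
  rewrite DI_closed.
  set (F := fun h => ev (intL H) (0 + h*1) (1 + h*(-1))).
  set (dF := fun h => 1 * ev (dsL (intL H)) (0 + h*1) (1 + h*(-1)) + (-1) * ev (dtL (intL H)) (0 + h*1) (1 + h*(-1))).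
  assert (D0 : RInt dF 0 1 = F 1 - F 0).
  { apply (FTC F dF).
    - intros; apply line_derive.
    - intros x _. unfold dF. apply (continuous_plus (fun h => 1 * ev (dsL (intL H)) (0 + h*1) (1 + h*(-1)))).
      + apply (continuous_mult (fun _ => 1)). apply continuous_const. apply line_cont.
      + apply (continuous_mult (fun _ => -1)). apply continuous_const. apply line_cont. }
  assert (E1 : RInt dF 0 1 = RInt (fun s => ev (intL (dsL H)) s (1 - s) - ev H s (1 - s)) 0 1).
  { apply RI_ext. intros x _. unfold dF. rewrite ev_ds_int, ev_dt_int.
    replace (0 + x*1) with x by ring. replace (1 + x*(-1)) with (1 - x) by ring. ring. }
  rewrite E1 in D0. clear E1.
  rewrite RI_minus in D0; [| apply exR_s_1ms | apply exR_s_1ms].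
  assert (F1 : F 1 = 0). { unfold F. replace (1 + 1 * -1) with 0 by ring. apply ev_int_t0. }
  assert (F0 : F 0 = RInt (fun t => ev H 0 t) 0 1).
  { unfold F. symmetry. apply RI_unique. replace (0+0*1) with 0 by ring.
    replace (1 + 0 * -1) with 1 by ring. apply is_RInt_t. }
  rewrite F1, F0 in D0.
  assert (B1 : Bbc H = RInt (fun s => ev H s (1 - s)) 0 1).
  { unfold Bbc. rewrite <- (RI_flip (fun s => ev H s (1 - s))); [| apply exR_s_1ms].
    apply RI_ext; intros; simpl; f_equal; ring. }
  assert (B2 : Bca H = RInt (fun t => ev H 0 t) 0 1).
  { unfold Bca. rewrite <- (RI_flip (fun t => ev H 0 t)); [| apply exR_0_s].
    reflexivity. }
  rewrite B1, B2. lra.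
Qed.

Lemma cont_eps (f : R -> R) x : continuous f x ->
  forall eps, 0 < eps -> exists d, 0 < d /\ forall y, Rabs (y - x) < d -> Rabs (f y - f x) < eps.
Proof.
  intros H eps He. apply continuity_pt_filterlim in H.
  unfold continuity_pt, continue_in, limit1_in, limit_in in H. simpl in H.
  destruct (H eps He) as [d [Hd H2]]. exists d; split; auto.
  intros y Hy. destruct (Req_dec y x) as [->|Hne].
  - unfold Rminus; rewrite Rplus_opp_r, Rabs_R0; auto.
  - apply H2. split. split; [exact I| auto]. exact Hy.
Qed.

Lemma zero_ext (g : R -> R) a b x : a < b -> a <= x <= b -> continuous g x ->
  (forall y, a < y < b -> g y = 0) -> g x = 0.
Proof.
  intros Hab Hx Hc Hz. destruct (Req_dec (g x) 0) as [E|Hne]; auto. exfalso.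
  destruct (cont_eps g x Hc (Rabs (g x))) as [d [Hd Hy]]. { apply Rabs_pos_lt; auto. }
  set (m := (a + b) / 2).
  set (h := Rmin (1/2) (d / (2 * (Rabs (m - x) + 1)))).
  assert (Hh0 : 0 < h). { unfold h. apply Rmin_pos. lra. apply Rdiv_lt_0_compat. lra.
    assert (0 <= Rabs (m - x)) by apply Rabs_pos. lra. }
  assert (Hh1 : h <= 1/2) by apply Rmin_l.
  assert (Hh2 : h <= d / (2 * (Rabs (m - x) + 1))) by apply Rmin_r.
  set (y := x + h * (m - x)).
  assert (Hya : a < y < b). { unfold y, m. split; nra. }
  specialize (Hz y Hya).
  assert (Hyx : Rabs (y - x) < d).
  { unfold y. replace (x + h * (m - x) - x) with (h * (m - x)) by ring.
    rewrite Rabs_mult, (Rabs_right h) by lra.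
    assert (0 <= Rabs (m - x)) by apply Rabs_pos.
    apply Rle_lt_trans with (d / (2 * (Rabs (m - x) + 1)) * Rabs (m - x)).
    apply Rmult_le_compat_r; auto.
    unfold Rdiv. rewrite Rmult_assoc.
    assert (Rabs (m-x) * / (2 * (Rabs (m - x) + 1)) < 1).
    { apply (Rmult_lt_reg_r (2 * (Rabs (m - x) + 1))). lra.
      rewrite Rmult_assoc, Rinv_l by lra. lra. }
    rewrite (Rmult_comm (/ _)). nra. }
  specialize (Hy y Hyx). rewrite Hz in Hy.
  replace (0 - g x) with (- g x) in Hy by ring. rewrite Rabs_Ropp in Hy. lra.
Qed.

Lemma RI_ge0 (f : R -> R) a b : a <= b -> ex_RInt f a b -> (forall x, a < x < b -> 0 <= f x) -> 0 <= RInt f a b.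
Proof. apply RInt_ge_0. Qed.
Lemma RI_chasles (f : R -> R) a b c : ex_RInt f a b -> ex_RInt f b c -> RInt f a b + RInt f b c = RInt f a c.
Proof. intros. apply (RInt_Chasles f); auto. Qed.

Lemma pos1 (f : R -> R) a b : a < b -> (forall x, a <= x <= b -> continuous f x) ->
  (forall x, a < x < b -> 0 <= f x) -> RInt f a b = 0 -> forall x, a < x < b -> f x = 0.
Proof.
  intros Hab Hc Hp HI x Hx.
  destruct (Req_dec (f x) 0) as [E|Hne]; auto. exfalso.
  assert (Hpos : 0 < f x). { specialize (Hp x Hx). lra. }
  destruct (cont_eps f x (Hc x ltac:(lra)) (f x / 2)) as [d [Hd Hy]]. lra.
  set (e := Rmin d (Rmin (x - a) (b - x)) / 2).
  assert (He : 0 < e). { unfold e. apply Rdiv_lt_0_compat; [|lra]. repeat apply Rmin_pos; lra. }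
  assert (He1 : e < d). { unfold e. assert (Rmin d (Rmin (x - a) (b - x)) <= d) by apply Rmin_l. lra. }
  assert (He2 : e < x - a). { unfold e. assert (Rmin d (Rmin (x - a) (b - x)) <= Rmin (x-a) (b-x)) by apply Rmin_r.
    assert (Rmin (x-a) (b-x) <= x - a) by apply Rmin_l. lra. }
  assert (He3 : e < b - x). { unfold e. assert (Rmin d (Rmin (x - a) (b - x)) <= Rmin (x-a) (b-x)) by apply Rmin_r.
    assert (Rmin (x-a) (b-x) <= b - x) by apply Rmin_r. lra. }
  assert (Hex : forall u v, a <= u -> u <= v -> v <= b -> ex_RInt f u v).
  { intros u v H1 H2 H3. apply exR_cont. intros z Hz. apply Hc.
    rewrite Rmin_left in Hz by lra. rewrite Rmax_right in Hz by lra. lra. }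
  assert (I1 : 0 <= RInt f a (x - e)). { apply RI_ge0. lra. apply Hex; lra. intros; apply Hp; lra. }
  assert (I3 : 0 <= RInt f (x + e) b). { apply RI_ge0. lra. apply Hex; lra. intros; apply Hp; lra. }
  assert (I2 : 0 < RInt f (x - e) (x + e)).
  { apply RInt_gt_0. lra.
    - intros y Hy'. assert (Rabs (y - x) < d). { apply Rabs_def1; lra. }
      specialize (Hy y H). apply Rabs_def2 in Hy. lra.
    - intros; apply Hc; lra. }
  rewrite <- (RI_chasles f a (x - e) b) in HI; [| apply Hex; lra | apply Hex; lra].
  rewrite <- (RI_chasles f (x - e) (x + e) b) in HI; [| apply Hex; lra | apply Hex; lra].
  lra.
Qed.

Definition openT s t := 0 < s /\ 0 < t /\ s + t < 1.
Definition closedT s t := 0 <= s /\ 0 <= t /\ s + t <= 1.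

Lemma pos2 H : (forall s t, closedT s t -> 0 <= ev H s t) -> DI H = 0 ->
  forall s t, openT s t -> ev H s t = 0.
Proof.
  intros Hp HD s t [Hs [Ht Hst]].
  rewrite DI_closed in HD.
  assert (Psi : forall s, 0 < s < 1 -> ev (intL H) s (1 - s) = 0).
  { apply (pos1 (fun s => ev (intL H) s (1 - s)) 0 1). lra.
    - intros x _. eapply continuous_ext; [|apply (line_cont (intL H) 0 1 1 (-1) x)].
      intros; simpl; f_equal; ring.
    - intros x Hx. rewrite <- (RI_unique _ _ _ _ (is_RInt_t H x (1 - x))).
      apply RI_ge0. lra. eexists; apply is_RInt_t.
      intros y Hy. apply Hp. unfold closedT; lra.
    - exact HD. }
  specialize (Psi s ltac:(lra)).
  rewrite <- (RI_unique _ _ _ _ (is_RInt_t H s (1 - s))) in Psi.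
  apply (pos1 (fun t => ev H s t) 0 (1 - s)); auto; try lra.
  - intros x _. eapply continuous_ext; [|apply (line_cont H s 0 0 1 x)].
    intros; simpl; f_equal; ring.
  - intros y Hy. apply Hp. unfold closedT; lra.
Qed.

Lemma closure_zero P : (forall s t, openT s t -> ev P s t = 0) ->
  forall s t, closedT s t -> ev P s t = 0.
Proof.
  intros Hz s t [Hs [Ht Hst]].
  assert (E := zero_ext (fun h => ev P (s + h * (1/3 - s)) (t + h * (1/3 - t))) 0 1 0).
  simpl in E. replace (s + 0 * (1/3 - s)) with s in E by ring.
  replace (t + 0 * (1/3 - t)) with t in E by ring.
  apply E. lra. lra. apply line_cont.
  intros y Hy. apply Hz. unfold openT. nra.
Qed.

Fixpoint sumL (g : nat -> list mono) (n : nat) : list mono :=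
  match n with O => g O | S n' => sumL g n' ++ g (S n') end.
Lemma ev_sumL g n x y : ev (sumL g n) x y = sum_f_R0 (fun i => ev (g i) x y) n.
Proof. induction n; simpl; auto. rewrite ev_app, IHn; auto. Qed.
Lemma degok_sumL m g n : (forall i, (i <= n)%nat -> degok m (g i)) -> degok m (sumL g n).
Proof. induction n; intros H; simpl; auto. apply degok_app; auto. Qed.

Lemma poly2_to_list n f : poly2 n f -> exists L, degok n L /\ forall x y, f x y = ev L x y.
Proof.
  intros [cf Hf].
  set (g := fun k l => [(if (k + l <=? n)%nat then cf k l else 0,
                         if (k + l <=? n)%nat then k else O,
                         if (k + l <=? n)%nat then l else O)]).
  exists (sumL (fun k => sumL (fun l => g k l) n) n). split.
  - apply degok_sumL; intros k _. apply degok_sumL; intros l _.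
    unfold g. destruct (k + l <=? n)%nat eqn:E.
    + apply degok_cons; [apply Nat.leb_le; auto| apply degok_nil].
    + apply degok_cons; [lia| apply degok_nil].
  - intros x y. rewrite Hf, ev_sumL. apply sum_eq; intros k _.
    rewrite ev_sumL. apply sum_eq; intros l _. unfold g.
    destruct (k + l <=? n)%nat; simpl; ring.
Qed.

Lemma sum_zero (f : nat -> R) n : (forall i, (i <= n)%nat -> f i = 0) -> sum_f_R0 f n = 0.
Proof. induction n; intros H; simpl. apply H; lia.
  rewrite IHn. rewrite H. ring. lia. intros i Hi; apply H; lia. Qed.
Lemma sum_single (f : nat -> R) n i : (i <= n)%nat -> (forall m, (m <= n)%nat -> m <> i -> f m = 0) ->
  sum_f_R0 f n = f i.
Proof.
  induction n; intros Hi H; simpl.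
  - assert (i = O) by lia; subst; auto.
  - destruct (Nat.eq_dec i (S n)) as [->|Hne].
    + rewrite sum_zero. ring. intros m Hm. apply H; lia.
    + rewrite IHn, (H (S n)); auto; try lia. ring.
Qed.

Lemma poly2_plus n f g : poly2 n f -> poly2 n g -> poly2 n (fun x y => f x y + g x y).
Proof.
  intros [cf Hf] [cg Hg]. exists (fun k l => cf k l + cg k l). intros x y.
  rewrite Hf, Hg, <- sum_plus. apply sum_eq; intros k _.
  rewrite <- sum_plus. apply sum_eq; intros l _.
  destruct (k + l <=? n)%nat; ring.
Qed.

Lemma poly2_mono n c k l : (k + l <= n)%nat -> poly2 n (fun x y => c * x ^ k * y ^ l).
Proof.
  intros Hkl. exists (fun K L => if andb (K =? k)%nat (L =? l)%nat then c else 0).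
  intros x y. rewrite (sum_single _ n k); [| lia |].
  - rewrite (sum_single _ n l); [| lia |].
    + rewrite !Nat.eqb_refl. simpl. replace (k + l <=? n)%nat with true. ring.
      symmetry; apply Nat.leb_le; auto.
    + intros m _ Hm. rewrite Nat.eqb_refl. apply Nat.eqb_neq in Hm. rewrite Hm.
      simpl. destruct (k + m <=? n)%nat; ring.
  - intros m _ Hm. apply sum_zero. intros i _. apply Nat.eqb_neq in Hm. rewrite Hm.
    simpl. destruct (m + i <=? n)%nat; ring.
Qed.

Lemma list_to_poly2 n L : degok n L -> poly2 n (fun x y => ev L x y).
Proof.
  induction L as [|[[c k] l] L IH]; intros H; simpl.
  - exists (fun _ _ => 0). intros x y. symmetry. apply sum_zero. intros i _.
    apply sum_zero. intros m _. destruct (i + m <=? n)%nat; ring.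
  - apply (poly2_plus n (fun x y => c * x ^ k * y ^ l)).
    + apply poly2_mono. apply (H c k l). left; auto.
    + apply IH. intros c' k' l' Hi. apply (H c' k' l'). right; auto.
Qed.

Lemma poly1_to_list n g : poly1_on01 n g -> exists L, degok n L /\ forall t, 0 <= t <= 1 -> g t = ev L t 0.
Proof.
  intros [cf Hg]. exists (sumL (fun k => [(cf k, k, O)]) n). split.
  - apply degok_sumL. intros i Hi. apply degok_cons; [lia| apply degok_nil].
  - intros t Ht. rewrite Hg, ev_sumL; auto. apply sum_eq; intros i _. simpl. ring.
Qed.

Definition Dt (a b c : pt) := det2 (psub b a) (psub c a).
Definition FxL (a b c : pt) : list mono := [(fst a,O,O); (fst b - fst a,1%nat,O); (fst c - fst a,O,1%nat)].
Definition FyL (a b c : pt) : list mono := [(snd a,O,O); (snd b - snd a,1%nat,O); (snd c - snd a,O,1%nat)].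
Definition G1L (a b c : pt) : list mono :=
  [((- fst a * (snd c - snd a) + snd a * (fst c - fst a)) / Dt a b c, O, O);
   ((snd c - snd a) / Dt a b c, 1%nat, O); (- (fst c - fst a) / Dt a b c, O, 1%nat)].
Definition G2L (a b c : pt) : list mono :=
  [(((snd b - snd a) * fst a - (fst b - fst a) * snd a) / Dt a b c, O, O);
   (- (snd b - snd a) / Dt a b c, 1%nat, O); ((fst b - fst a) / Dt a b c, O, 1%nat)].

Lemma degok1_3 (x y z : R) : degok 1 [(x,O,O); (y,1%nat,O); (z,O,1%nat)].
Proof. repeat apply degok_cons; try lia. apply degok_nil. Qed.

Lemma ev_FxL a b c s t : ev (FxL a b c) s t = fst (tri_pt a b c s t).
Proof. unfold FxL, tri_pt; simpl; ring. Qed.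
Lemma ev_FyL a b c s t : ev (FyL a b c) s t = snd (tri_pt a b c s t).
Proof. unfold FyL, tri_pt; simpl; ring. Qed.

Lemma GF1 a b c s t : Dt a b c <> 0 ->
  ev (G1L a b c) (fst (tri_pt a b c s t)) (snd (tri_pt a b c s t)) = s.
Proof.
  destruct a as [a1 a2], b as [b1 b2], c as [c1 c2]; unfold G1L, tri_pt, Dt, det2, psub; simpl.
  intros H. field. exact H.
Qed.
Lemma GF2 a b c s t : Dt a b c <> 0 ->
  ev (G2L a b c) (fst (tri_pt a b c s t)) (snd (tri_pt a b c s t)) = t.
Proof.
  destruct a as [a1 a2], b as [b1 b2], c as [c1 c2]; unfold G2L, tri_pt, Dt, det2, psub; simpl.
  intros H. field. exact H.
Qed.
Lemma FG1 a b c x y : Dt a b c <> 0 ->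
  fst (tri_pt a b c (ev (G1L a b c) x y) (ev (G2L a b c) x y)) = x.
Proof.
  destruct a as [a1 a2], b as [b1 b2], c as [c1 c2]; unfold G1L, G2L, tri_pt, Dt, det2, psub; simpl.
  intros H. field. exact H.
Qed.
Lemma FG2 a b c x y : Dt a b c <> 0 ->
  snd (tri_pt a b c (ev (G1L a b c) x y) (ev (G2L a b c) x y)) = y.
Proof.
  destruct a as [a1 a2], b as [b1 b2], c as [c1 c2]; unfold G1L, G2L, tri_pt, Dt, det2, psub; simpl.
  intros H. field. exact H.
Qed.

Lemma lerp_ab a b c t : lerp a b t = tri_pt a b c t 0.
Proof. unfold lerp, tri_pt; f_equal; ring. Qed.
Lemma lerp_bc a b c t : lerp b c t = tri_pt a b c (1 - t) t.
Proof. unfold lerp, tri_pt; f_equal; ring. Qed.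
Lemma lerp_ca a b c t : lerp c a t = tri_pt a b c 0 (1 - t).
Proof. unfold lerp, tri_pt; f_equal; ring. Qed.

Lemma Derive_R (f : R -> R) (x l : R) : is_derive f x l -> Derive f x = l.
Proof. intros H. exact (is_derive_unique f x l H). Qed.

Lemma div_e a b c P ex ey x y : Dt a b c <> 0 ->
  div2 (fun x y => ev P (ev (G1L a b c) x y) (ev (G2L a b c) x y) * ex)
       (fun x y => ev P (ev (G1L a b c) x y) (ev (G2L a b c) x y) * ey) x y =
  (ex * ((snd c - snd a) / Dt a b c) + ey * (- (fst c - fst a) / Dt a b c)) *
     ev (dsL P) (ev (G1L a b c) x y) (ev (G2L a b c) x y) +
  (ex * (- (snd b - snd a) / Dt a b c) + ey * ((fst b - fst a) / Dt a b c)) *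
     ev (dtL P) (ev (G1L a b c) x y) (ev (G2L a b c) x y).
Proof.
  intros HD. unfold div2.
  set (D := Dt a b c).
  set (g10 := (- fst a * (snd c - snd a) + snd a * (fst c - fst a)) / D).
  set (g20 := ((snd b - snd a) * fst a - (fst b - fst a) * snd a) / D).
  assert (E1 : forall x y, ev (G1L a b c) x y = (g10 + y * (- (fst c - fst a) / D)) + x * ((snd c - snd a)/D)).
  { intros; unfold G1L; simpl; fold D; unfold g10; ring. }
  assert (E2 : forall x y, ev (G2L a b c) x y = (g20 + y * ((fst b - fst a) / D)) + x * (- (snd b - snd a)/D)).
  { intros; unfold G2L; simpl; fold D; unfold g20; ring. }
  assert (E1' : forall x y, ev (G1L a b c) x y = (g10 + x * ((snd c - snd a)/D)) + y * (- (fst c - fst a) / D)).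
  { intros; rewrite E1; ring. }
  assert (E2' : forall x y, ev (G2L a b c) x y = (g20 + x * (- (snd b - snd a)/D)) + y * ((fst b - fst a) / D)).
  { intros; rewrite E2; ring. }
  rewrite (Derive_R _ x ((((snd c - snd a)/D) * ev (dsL P) (ev (G1L a b c) x y) (ev (G2L a b c) x y)
       + (- (snd b - snd a)/D) * ev (dtL P) (ev (G1L a b c) x y) (ev (G2L a b c) x y)) * ex)).
  rewrite (Derive_R _ y (((- (fst c - fst a) / D) * ev (dsL P) (ev (G1L a b c) x y) (ev (G2L a b c) x y)
       + ((fst b - fst a) / D) * ev (dtL P) (ev (G1L a b c) x y) (ev (G2L a b c) x y)) * ey)).
  - ring.
  - apply (is_derive_ext (fun t => ev P ((g10 + x * ((snd c - snd a)/D)) + t * (- (fst c - fst a) / D))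
        ((g20 + x * (- (snd b - snd a)/D)) + t * ((fst b - fst a) / D)) * ey)).
    { intros t. cbv beta. rewrite (E1' x t), (E2' x t). reflexivity. }
    eapply isd_eq. apply (isd_mult _ (fun _ => ey)). apply line_derive. apply isd_const.
    rewrite (E1' x y), (E2' x y). ring.
  - apply (is_derive_ext (fun t => ev P ((g10 + y * (- (fst c - fst a) / D)) + t * ((snd c - snd a)/D))
        ((g20 + y * ((fst b - fst a) / D)) + t * (- (snd b - snd a)/D)) * ex)).
    { intros t. cbv beta. rewrite (E1 t y), (E2 t y). reflexivity. }
    eapply isd_eq. apply (isd_mult _ (fun _ => ex)). apply line_derive. apply isd_const.
    rewrite (E1 x y), (E2 x y). ring.
Qed.

Definition sgn (z : R) : R := if Rlt_dec 0 z then -1 else 1.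

Lemma edge_flux_eq p q r vb (pf : R -> R -> R) ex ey :
  seg_len p q <> 0 ->
  ex_RInt (fun t => vb (fst (lerp p q t)) (snd (lerp p q t)) * pf (fst (lerp p q t)) (snd (lerp p q t))) 0 1 ->
  edge_flux p q r vb (fun x y => pf x y * ex) (fun x y => pf x y * ey) =
  sgn ((snd q - snd p) * (fst r - fst p) + (fst p - fst q) * (snd r - snd p)) *
  (ex * (snd q - snd p) - ey * (fst q - fst p)) *
  RInt (fun t => vb (fst (lerp p q t)) (snd (lerp p q t)) * pf (fst (lerp p q t)) (snd (lerp p q t))) 0 1.
Proof.
  intros Hl Hex. unfold edge_flux, seg_int, out_normal, sgn. cbv zeta. cbn [fst snd].
  match goal with |- context [if Rlt_dec 0 ?z then -1 else 1] => set (sg := if Rlt_dec 0 z then -1 else 1) end.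
  rewrite (RI_ext _ (fun t => (sg * (ex * (snd q - snd p) - ey * (fst q - fst p)) / seg_len p q) *
     (vb (fst (lerp p q t)) (snd (lerp p q t)) * pf (fst (lerp p q t)) (snd (lerp p q t))))).
  - rewrite RI_scal by exact Hex. field. exact Hl.
  - intros t _. field. exact Hl.
Qed.

Lemma sgn_abs z D : D <> 0 -> z = - D -> sgn z * D = Rabs D.
Proof.
  intros HD ->. unfold sgn. destruct (Rlt_dec 0 (-D)).
  - rewrite Rabs_left by lra. ring.
  - rewrite Rabs_right by lra. ring.
Qed.

Lemma seg_len_nz p q : (fst q - fst p) ^ 2 + (snd q - snd p) ^ 2 <> 0 -> seg_len p q <> 0.
Proof.
  intros H. unfold seg_len. apply Rgt_not_eq. apply sqrt_lt_R0.
  assert (0 <= (fst q - fst p) ^ 2) by apply pow2_ge_0.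
  assert (0 <= (snd q - snd p) ^ 2) by apply pow2_ge_0. lra.
Qed.

Lemma sq0 x y : x ^ 2 + y ^ 2 = 0 -> x = 0 /\ y = 0.
Proof. intros H. split; nra. Qed.

Lemma seg_nz_ab a b c : Dt a b c <> 0 -> seg_len a b <> 0.
Proof.
  intros HD. apply seg_len_nz. intros H. apply sq0 in H. apply HD.
  destruct a as [a1 a2], b as [b1 b2], c as [c1 c2]; unfold Dt, det2, psub in *; simpl in *.
  destruct H as [H1 H2]. replace (b1 - a1) with 0 by lra. replace (b2 - a2) with 0 by lra. ring.
Qed.
Lemma seg_nz_bc a b c : Dt a b c <> 0 -> seg_len b c <> 0.
Proof.
  intros HD. apply seg_len_nz. intros H. apply sq0 in H. apply HD.
  destruct a as [a1 a2], b as [b1 b2], c as [c1 c2]; unfold Dt, det2, psub in *; simpl in *.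
  destruct H as [H1 H2]. replace c1 with b1 by lra. replace c2 with b2 by lra. ring.
Qed.
Lemma seg_nz_ca a b c : Dt a b c <> 0 -> seg_len c a <> 0.
Proof.
  intros HD. apply seg_len_nz. intros H. apply sq0 in H. apply HD.
  destruct a as [a1 a2], b as [b1 b2], c as [c1 c2]; unfold Dt, det2, psub in *; simpl in *.
  destruct H as [H1 H2]. replace (c1 - a1) with 0 by lra. replace (c2 - a2) with 0 by lra. ring.
Qed.

Definition EI (p q : pt) vb (pf : R -> R -> R) : R :=
  RInt (fun t => vb (fst (lerp p q t)) (snd (lerp p q t)) * pf (fst (lerp p q t)) (snd (lerp p q t))) 0 1.

Lemma bdry_flux_eq a b c vb pf ex ey : Dt a b c <> 0 ->
  ex_RInt (fun t => vb (fst (lerp a b t)) (snd (lerp a b t)) * pf (fst (lerp a b t)) (snd (lerp a b t))) 0 1 ->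
  ex_RInt (fun t => vb (fst (lerp b c t)) (snd (lerp b c t)) * pf (fst (lerp b c t)) (snd (lerp b c t))) 0 1 ->
  ex_RInt (fun t => vb (fst (lerp c a t)) (snd (lerp c a t)) * pf (fst (lerp c a t)) (snd (lerp c a t))) 0 1 ->
  Dt a b c * bdry_flux a b c vb (fun x y => pf x y * ex) (fun x y => pf x y * ey) =
  Rabs (Dt a b c) * ((ex * (snd b - snd a) - ey * (fst b - fst a)) * EI a b vb pf
                  + (ex * (snd c - snd b) - ey * (fst c - fst b)) * EI b c vb pf
                  + (ex * (snd a - snd c) - ey * (fst a - fst c)) * EI c a vb pf).
Proof.
  intros HD H1 H2 H3. unfold bdry_flux.
  rewrite !edge_flux_eq.
  unfold EI.
  assert (Z1 : (snd b - snd a) * (fst c - fst a) + (fst a - fst b) * (snd c - snd a) = - Dt a b c).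
  { destruct a as [a1 a2], b as [b1 b2], c as [c1 c2]; unfold Dt, det2, psub; simpl; ring. }
  assert (Z2 : (snd c - snd b) * (fst a - fst b) + (fst b - fst c) * (snd a - snd b) = - Dt a b c).
  { destruct a as [a1 a2], b as [b1 b2], c as [c1 c2]; unfold Dt, det2, psub; simpl; ring. }
  assert (Z3 : (snd a - snd c) * (fst b - fst c) + (fst c - fst a) * (snd b - snd c) = - Dt a b c).
  { destruct a as [a1 a2], b as [b1 b2], c as [c1 c2]; unfold Dt, det2, psub; simpl; ring. }
  rewrite Z1, Z2, Z3. rewrite <- (sgn_abs (- Dt a b c) (Dt a b c) HD eq_refl). ring.
  all: try (exact H1 || exact H2 || exact H3).
  exact (seg_nz_ca a b c HD). exact (seg_nz_bc a b c HD). exact (seg_nz_ab a b c HD).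
Qed.

Lemma tri_int_DI a b c f L :
  (forall s t, openT s t -> f (fst (tri_pt a b c s t)) (snd (tri_pt a b c s t)) = ev L s t) ->
  tri_int a b c f = Rabs (Dt a b c) * DI L.
Proof.
  intros H. unfold tri_int, DI, Dt. f_equal. apply RI_ext. intros s Hs.
  rewrite Rmin_left in Hs by lra. rewrite Rmax_right in Hs by lra.
  apply RI_ext. intros t Ht.
  rewrite Rmin_left in Ht by lra. rewrite Rmax_right in Ht by lra. apply H. unfold openT; lra.
Qed.

Definition pfun a b c P := fun x y => ev P (ev (G1L a b c) x y) (ev (G2L a b c) x y).

Lemma pfun_F a b c P s t : Dt a b c <> 0 ->
  pfun a b c P (fst (tri_pt a b c s t)) (snd (tri_pt a b c s t)) = ev P s t.
Proof. intros HD. unfold pfun. rewrite GF1, GF2 by exact HD. reflexivity. Qed.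

Lemma poly2_ext n f g : (forall x y, f x y = g x y) -> poly2 n f -> poly2 n g.
Proof. intros E [cf H]. exists cf. intros x y. rewrite <- E. apply H. Qed.

Lemma pfun_poly2 a b c n P ex : degok n P -> poly2 n (fun x y => pfun a b c P x y * ex).
Proof.
  intros HP. apply (poly2_ext n (fun x y => ev (scaleL ex (compL P (G1L a b c) (G2L a b c))) x y)).
  - intros x y. rewrite ev_scaleL, ev_compL. unfold pfun. ring.
  - apply list_to_poly2. apply degok_scaleL. apply degok_compL; auto; apply degok1_3.
Qed.

Definition Jab a b vb P : R := RInt (fun t => vb (fst (lerp a b t)) (snd (lerp a b t)) * ev P t 0) 0 1.
Definition Jbc b c vb P : R := RInt (fun t => vb (fst (lerp b c t)) (snd (lerp b c t)) * ev P (1 - t) t) 0 1.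
Definition Jca c a vb P : R := RInt (fun t => vb (fst (lerp c a t)) (snd (lerp c a t)) * ev P 0 (1 - t)) 0 1.

Definition edge_ok p q vb := exists L : list mono, forall t, 0 <= t <= 1 ->
  vb (fst (lerp p q t)) (snd (lerp p q t)) = ev L t 0.

Lemma exR_edge p q vb (g : R -> R) : edge_ok p q vb -> (forall t, 0 <= t <= 1 -> continuous g t) ->
  ex_RInt (fun t => vb (fst (lerp p q t)) (snd (lerp p q t)) * g t) 0 1.
Proof.
  intros [L HL] Hg. apply (exR_ext (fun t => ev L t 0 * g t)).
  - intros t Ht. rewrite Rmin_left in Ht by lra. rewrite Rmax_right in Ht by lra. rewrite HL; auto; lra.
  - apply exR_cont. intros z Hz. rewrite Rmin_left in Hz by lra. rewrite Rmax_right in Hz by lra.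
    apply (continuous_mult (fun t => ev L t 0)).
    + eapply continuous_ext; [|apply (line_cont L 0 1 0 0 z)]. intros; simpl; f_equal; ring.
    + apply Hg; auto.
Qed.

Lemma EI_ab a b c vb P : Dt a b c <> 0 -> EI a b vb (pfun a b c P) = Jab a b vb P.
Proof. intros HD. unfold EI, Jab. apply RI_ext. intros t _. rewrite (lerp_ab a b c), pfun_F; auto. Qed.
Lemma EI_bc a b c vb P : Dt a b c <> 0 -> EI b c vb (pfun a b c P) = Jbc b c vb P.
Proof. intros HD. unfold EI, Jbc. apply RI_ext. intros t _. rewrite (lerp_bc a b c), pfun_F; auto. Qed.
Lemma EI_ca a b c vb P : Dt a b c <> 0 -> EI c a vb (pfun a b c P) = Jca c a vb P.
Proof. intros HD. unfold EI, Jca. apply RI_ext. intros t _. rewrite (lerp_ca a b c), pfun_F; auto. Qed.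

Lemma exR_pf_ab a b c vb P : Dt a b c <> 0 -> edge_ok a b vb ->
  ex_RInt (fun t => vb (fst (lerp a b t)) (snd (lerp a b t)) * pfun a b c P (fst (lerp a b t)) (snd (lerp a b t))) 0 1.
Proof.
  intros HD He. apply (exR_ext (fun t => vb (fst (lerp a b t)) (snd (lerp a b t)) * ev P t 0)).
  - intros t _. f_equal. rewrite (lerp_ab a b c). rewrite pfun_F; auto.
  - apply exR_edge; auto. intros t _. eapply continuous_ext; [|apply (line_cont P 0 1 0 0 t)]. intros; simpl; f_equal; ring.
Qed.
Lemma exR_pf_bc a b c vb P : Dt a b c <> 0 -> edge_ok b c vb ->
  ex_RInt (fun t => vb (fst (lerp b c t)) (snd (lerp b c t)) * pfun a b c P (fst (lerp b c t)) (snd (lerp b c t))) 0 1.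
Proof.
  intros HD He. apply (exR_ext (fun t => vb (fst (lerp b c t)) (snd (lerp b c t)) * ev P (1 - t) t)).
  - intros t _. f_equal. rewrite (lerp_bc a b c). rewrite pfun_F; auto.
  - apply exR_edge; auto. intros t _. eapply continuous_ext; [|apply (line_cont P 1 (-1) 0 1 t)]. intros; simpl; f_equal; ring.
Qed.
Lemma exR_pf_ca a b c vb P : Dt a b c <> 0 -> edge_ok c a vb ->
  ex_RInt (fun t => vb (fst (lerp c a t)) (snd (lerp c a t)) * pfun a b c P (fst (lerp c a t)) (snd (lerp c a t))) 0 1.
Proof.
  intros HD He. apply (exR_ext (fun t => vb (fst (lerp c a t)) (snd (lerp c a t)) * ev P 0 (1 - t))).
  - intros t _. f_equal. rewrite (lerp_ca a b c). rewrite pfun_F; auto.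
  - apply exR_edge; auto. intros t _. eapply continuous_ext; [|apply (line_cont P 0 0 1 (-1) t)]. intros; simpl; f_equal; ring.
Qed.

Lemma master2 a b c j v0 vb w1 w2 V0 P :
  Dt a b c <> 0 -> (forall s t, ev V0 s t = v0 (fst (tri_pt a b c s t)) (snd (tri_pt a b c s t))) ->
  edge_ok a b vb -> edge_ok b c vb -> edge_ok c a vb ->
  is_weak_grad j a b c v0 vb w1 w2 -> degok (S j) P ->
  tri_int a b c (fun x y => w1 x y * (pfun a b c P x y * (fst c - fst a)) + w2 x y * (pfun a b c P x y * (snd c - snd a)))
  = Rabs (Dt a b c) * (Jbc b c vb P - Jab a b vb P - DI (mulL V0 (dtL P))).
Proof.
  intros HD HV Eab Ebc Eca [_ [_ Hw]] HP.
  rewrite (Hw _ _ (pfun_poly2 a b c (S j) P _ HP) (pfun_poly2 a b c (S j) P _ HP)).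
  assert (T1 : tri_int a b c (fun x y => v0 x y * div2 (fun x y => pfun a b c P x y * (fst c - fst a))
        (fun x y => pfun a b c P x y * (snd c - snd a)) x y) = Rabs (Dt a b c) * DI (mulL V0 (dtL P))).
  { apply tri_int_DI. intros s t _. unfold pfun. rewrite div_e by exact HD. rewrite GF1, GF2 by exact HD.
    rewrite ev_mulL, <- HV. generalize HD.
    destruct a as [a1 a2], b as [b1 b2], c as [c1 c2]; unfold Dt, det2, psub; simpl.
    intros HD'. field. exact HD'. }
  assert (T2 : Dt a b c * bdry_flux a b c vb (fun x y => pfun a b c P x y * (fst c - fst a))
        (fun x y => pfun a b c P x y * (snd c - snd a)) = Dt a b c * (Rabs (Dt a b c) * (Jbc b c vb P - Jab a b vb P))).
  { rewrite bdry_flux_eq; auto using exR_pf_ab, exR_pf_bc, exR_pf_ca.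
    rewrite EI_ab, EI_bc, EI_ca by exact HD.
    unfold Dt, det2, psub.
    destruct a as [a1 a2], b as [b1 b2], c as [c1 c2]; simpl. ring. }
  apply Rmult_eq_reg_l in T2; [|exact HD].
  rewrite T1, T2. ring.
Qed.

Lemma master1 a b c j v0 vb w1 w2 V0 P :
  Dt a b c <> 0 -> (forall s t, ev V0 s t = v0 (fst (tri_pt a b c s t)) (snd (tri_pt a b c s t))) ->
  edge_ok a b vb -> edge_ok b c vb -> edge_ok c a vb ->
  is_weak_grad j a b c v0 vb w1 w2 -> degok (S j) P ->
  tri_int a b c (fun x y => w1 x y * (pfun a b c P x y * (fst b - fst a)) + w2 x y * (pfun a b c P x y * (snd b - snd a)))
  = Rabs (Dt a b c) * (Jbc b c vb P - Jca c a vb P - DI (mulL V0 (dsL P))).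
Proof.
  intros HD HV Eab Ebc Eca [_ [_ Hw]] HP.
  rewrite (Hw _ _ (pfun_poly2 a b c (S j) P _ HP) (pfun_poly2 a b c (S j) P _ HP)).
  assert (T1 : tri_int a b c (fun x y => v0 x y * div2 (fun x y => pfun a b c P x y * (fst b - fst a))
        (fun x y => pfun a b c P x y * (snd b - snd a)) x y) = Rabs (Dt a b c) * DI (mulL V0 (dsL P))).
  { apply tri_int_DI. intros s t _. unfold pfun. rewrite div_e by exact HD. rewrite GF1, GF2 by exact HD.
    rewrite ev_mulL, <- HV. generalize HD.
    destruct a as [a1 a2], b as [b1 b2], c as [c1 c2]; unfold Dt, det2, psub; simpl.
    intros HD'. field. exact HD'. }
  assert (T2 : Dt a b c * bdry_flux a b c vb (fun x y => pfun a b c P x y * (fst b - fst a))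
        (fun x y => pfun a b c P x y * (snd b - snd a)) = Dt a b c * (Rabs (Dt a b c) * (Jbc b c vb P - Jca c a vb P))).
  { rewrite bdry_flux_eq; auto using exR_pf_ab, exR_pf_bc, exR_pf_ca.
    rewrite EI_ab, EI_bc, EI_ca by exact HD.
    unfold Dt, det2, psub.
    destruct a as [a1 a2], b as [b1 b2], c as [c1 c2]; simpl. ring. }
  apply Rmult_eq_reg_l in T2; [|exact HD].
  rewrite T1, T2. ring.
Qed.

Lemma cR_const (c x : R) : continuous (fun _ : R => c) x.
Proof. apply continuous_const. Qed.
Lemma cR_id (x : R) : continuous (fun t : R => t) x.
Proof. apply continuous_id. Qed.
Lemma cR_mult (f g : R -> R) x : continuous f x -> continuous g x -> continuous (fun t => f t * g t) x.
Proof. intros. apply (continuous_mult f g); auto. Qed.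
Lemma cR_plus (f g : R -> R) x : continuous f x -> continuous g x -> continuous (fun t => f t + g t) x.
Proof. intros. apply (continuous_plus f g); auto. Qed.
Lemma cR_minus (f g : R -> R) x : continuous f x -> continuous g x -> continuous (fun t => f t - g t) x.
Proof. intros. apply (continuous_minus f g); auto. Qed.
Lemma cR_pow (f : R -> R) k x : continuous f x -> continuous (fun t => f t ^ k) x.
Proof. intros H. induction k; simpl. apply cR_const. apply cR_mult; auto. Qed.
Lemma cR_ev L (f g : R -> R) x : continuous f x -> continuous g x -> continuous (fun t => ev L (f t) (g t)) x.
Proof.
  intros Hf Hg. induction L as [|[[c k] l] L IH]; simpl.
  - apply cR_const.
  - apply (cR_plus (fun t => c * f t ^ k * g t ^ l)); auto.
    apply cR_mult; [apply (cR_mult (fun _ => c))|]; auto using cR_const, cR_pow.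
Qed.
Ltac cont := repeat match goal with
  | |- continuous (fun u => ?c) _ => apply cR_const
  | |- continuous (fun u => u) _ => apply cR_id
  | |- continuous (fun u => @?F u + @?G u) _ => apply (cR_plus F G)
  | |- continuous (fun u => @?F u - @?G u) _ => apply (cR_minus F G)
  | |- continuous (fun u => @?F u * @?G u) _ => apply (cR_mult F G)
  | |- continuous (fun u => ev ?L (@?F u) (@?G u)) _ => apply (cR_ev L F G)
  end.
Lemma exR_c (f : R -> R) : (forall x, continuous f x) -> ex_RInt f 0 1.
Proof. intros H; apply exR_cont; auto. Qed.

Lemma ev_dt_mul A B s t : ev (dtL (mulL A B)) s t = ev (dtL A) s t * ev B s t + ev A s t * ev (dtL B) s t.
Proof.
  assert (E1 := Derive_R _ _ _ (line_derive (mulL A B) s 0 0 1 t)).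
  assert (E2 := Derive_R (fun h => ev A (s + h*0) (0 + h*1) * ev B (s + h*0) (0 + h*1)) t _
             (isd_mult _ _ t _ _ (line_derive A s 0 0 1 t) (line_derive B s 0 0 1 t))).
  rewrite (Derive_ext _ (fun h => ev A (s + h*0) (0 + h*1) * ev B (s + h*0) (0 + h*1))) in E1
    by (intros; apply ev_mulL).
  rewrite E1 in E2. replace (s + t*0) with s in E2 by ring. replace (0 + t*1) with t in E2 by ring.
  lra.
Qed.
Lemma ev_ds_mul A B s t : ev (dsL (mulL A B)) s t = ev (dsL A) s t * ev B s t + ev A s t * ev (dsL B) s t.
Proof.
  assert (E1 := Derive_R _ _ _ (line_derive (mulL A B) 0 1 t 0 s)).
  assert (E2 := Derive_R (fun h => ev A (0 + h*1) (t + h*0) * ev B (0 + h*1) (t + h*0)) s _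
             (isd_mult _ _ s _ _ (line_derive A 0 1 t 0 s) (line_derive B 0 1 t 0 s))).
  rewrite (Derive_ext _ (fun h => ev A (0 + h*1) (t + h*0) * ev B (0 + h*1) (t + h*0))) in E1
    by (intros; apply ev_mulL).
  rewrite E1 in E2. replace (t + s*0) with t in E2 by ring. replace (0 + s*1) with s in E2 by ring.
  lra.
Qed.

Lemma deg0_dt L s t : degok 0 L -> ev (dtL L) s t = 0.
Proof.
  induction L as [|[[c k] l] L IH]; intros H; simpl; auto.
  assert (Hl : (k + l <= 0)%nat) by (apply (H c); left; auto).
  assert (l = O) by lia; subst l. simpl. rewrite IH. ring.
  intros c' k' l' Hi; apply (H c' k' l'); right; auto.
Qed.
Lemma deg0_ds L s t : degok 0 L -> ev (dsL L) s t = 0.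
Proof.
  induction L as [|[[c k] l] L IH]; intros H; simpl; auto.
  assert (Hl : (k + l <= 0)%nat) by (apply (H c); left; auto).
  assert (k = O) by lia; subst k. simpl. rewrite IH. ring.
  intros c' k' l' Hi; apply (H c' k' l'); right; auto.
Qed.

Lemma ftc_t A s t : RInt (fun u => ev (dtL A) s u) 0 t = ev A s t - ev A s 0.
Proof.
  rewrite (RI_ext _ (fun u => 0 * ev (dsL A) (s + u*0) (0 + u*1) + 1 * ev (dtL A) (s + u*0) (0 + u*1))).
  - rewrite (FTC (fun u => ev A (s + u*0) (0 + u*1))).
    + f_equal; f_equal; ring.
    + intros; apply line_derive.
    + intros; cont.
  - intros x _. replace (s + x*0) with s by ring. replace (0 + x*1) with x by ring. ring.
Qed.
Lemma ftc_s A s : RInt (fun u => ev (dsL A) u 0) 0 s = ev A s 0 - ev A 0 0.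
Proof.
  rewrite (RI_ext _ (fun u => 1 * ev (dsL A) (0 + u*1) (0 + u*0) + 0 * ev (dtL A) (0 + u*1) (0 + u*0))).
  - rewrite (FTC (fun u => ev A (0 + u*1) (0 + u*0))).
    + f_equal; f_equal; ring.
    + intros; apply line_derive.
    + intros; cont.
  - intros x _. replace (0 + x*1) with x by ring. replace (0 + x*0) with 0 by ring. ring.
Qed.

Lemma decomp j L : degok (S j) L -> exists d0 E, degok j E /\ forall t, ev L t 0 = d0 + t * ev E t 0.
Proof.
  induction L as [|[[c k] l] L IH]; intros H.
  - exists 0, []. split. apply degok_nil. intros; simpl; ring.
  - destruct IH as [d0 [E [HE HEv]]]. { intros c' k' l' Hi; apply (H c' k' l'); right; auto. }
    assert (Hkl : (k + l <= S j)%nat) by (apply (H c); left; auto).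
    destruct l as [|l].
    + destruct k as [|k].
      * exists (c + d0), E. split; auto. intros t. simpl. rewrite HEv. ring.
      * exists d0, ((c,k,O) :: E). split. apply degok_cons; auto; lia.
        intros t. simpl. rewrite HEv. ring.
    + exists d0, E. split; auto. intros t. simpl. rewrite HEv. ring.
Qed.

Lemma closedT_in_tri a b c s t : closedT s t -> in_tri a b c (fst (tri_pt a b c s t), snd (tri_pt a b c s t)).
Proof. intros [H1 [H2 H3]]. exists s, t. repeat split; auto. Qed.

Lemma sq_int_zero L : RInt (fun t => ev L t 0 * ev L t 0) 0 1 = 0 -> forall t, 0 <= t <= 1 -> ev L t 0 = 0.
Proof.
  intros HI t Ht.
  assert (Z : forall y, 0 < y < 1 -> ev L y 0 = 0).
  { intros y Hy. assert (E := pos1 (fun t => ev L t 0 * ev L t 0) 0 1 ltac:(lra)).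
    assert (E2 : ev L y 0 * ev L y 0 = 0).
    { apply E; auto. intros; cont. intros; apply Rle_0_sqr. }
    apply Rmult_integral in E2; destruct E2; auto. }
  apply (zero_ext (fun t => ev L t 0) 0 1); auto. lra. cont.
Qed.

Lemma forward a b c j v0 vb w1 w2 V0 Lab Lbc Lca :
  Dt a b c <> 0 ->
  (forall s t, ev V0 s t = v0 (fst (tri_pt a b c s t)) (snd (tri_pt a b c s t))) ->
  degok j V0 ->
  (forall t, 0 <= t <= 1 -> vb (fst (lerp a b t)) (snd (lerp a b t)) = ev Lab t 0) -> degok (S j) Lab ->
  (forall t, 0 <= t <= 1 -> vb (fst (lerp b c t)) (snd (lerp b c t)) = ev Lbc t 0) -> degok (S j) Lbc ->
  (forall t, 0 <= t <= 1 -> vb (fst (lerp c a t)) (snd (lerp c a t)) = ev Lca t 0) -> degok (S j) Lca ->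
  is_weak_grad j a b c v0 vb w1 w2 ->
  (forall x y, in_tri a b c (x, y) -> w1 x y = 0 /\ w2 x y = 0) ->
  exists C, (forall s t, closedT s t -> ev V0 s t = C) /\
    (forall t, 0 <= t <= 1 -> ev Lab t 0 = C) /\
    (forall t, 0 <= t <= 1 -> ev Lbc t 0 = C) /\
    (forall t, 0 <= t <= 1 -> ev Lca t 0 = C).
Proof.
  intros HD HV HV0 Hab HLab Hbc HLbc Hca HLca Hwg Hw.
  assert (Eab : edge_ok a b vb) by (exists Lab; auto).
  assert (Ebc : edge_ok b c vb) by (exists Lbc; auto).
  assert (Eca : edge_ok c a vb) by (exists Lca; auto).
  assert (HDa : Rabs (Dt a b c) <> 0) by (apply Rabs_no_R0; auto).
  assert (Z : forall P ex ey, tri_int a b c (fun x y => w1 x y * (pfun a b c P x y * ex) + w2 x y * (pfun a b c P x y * ey)) = 0).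
  { intros P ex ey. rewrite (tri_int_DI _ _ _ _ []). rewrite DI_nil; ring.
    intros s t Hst. destruct (Hw _ _ (closedT_in_tri a b c s t ltac:(unfold openT, closedT in *; lra))) as [W1 W2].
    rewrite W1, W2. simpl. ring. }
  assert (F2 : forall P, degok (S j) P -> DI (mulL V0 (dtL P)) = Jbc b c vb P - Jab a b vb P).
  { intros P HP. assert (E := master2 a b c j v0 vb w1 w2 V0 P HD HV Eab Ebc Eca Hwg HP).
    rewrite Z in E. symmetry in E. apply Rmult_integral in E. destruct E as [E|E]; [contradiction|lra]. }
  assert (F1 : forall P, degok (S j) P -> DI (mulL V0 (dsL P)) = Jbc b c vb P - Jca c a vb P).
  { intros P HP. assert (E := master1 a b c j v0 vb w1 w2 V0 P HD HV Eab Ebc Eca Hwg HP).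
    rewrite Z in E. symmetry in E. apply Rmult_integral in E. destruct E as [E|E]; [contradiction|lra]. }
  assert (EqT : forall P, degok (S j) P ->
    DI (mulL (dtL V0) P) = Bbc (mulL V0 P) - Bab (mulL V0 P) - (Jbc b c vb P - Jab a b vb P)).
  { intros P HP. rewrite <- (F2 P HP), <- IBP_t.
    rewrite (DI_ext (dtL (mulL V0 P)) (mulL (dtL V0) P ++ mulL V0 (dtL P))).
    - rewrite DI_app. ring.
    - intros s t _ _. rewrite ev_app, ev_dt_mul, !ev_mulL. reflexivity. }
  assert (EqS : forall P, degok (S j) P ->
    DI (mulL (dsL V0) P) = Bbc (mulL V0 P) - Bca (mulL V0 P) - (Jbc b c vb P - Jca c a vb P)).
  { intros P HP. rewrite <- (F1 P HP), <- IBP_s.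
    rewrite (DI_ext (dsL (mulL V0 P)) (mulL (dsL V0) P ++ mulL V0 (dsL P))).
    - rewrite DI_app. ring.
    - intros s t _ _. rewrite ev_app, ev_ds_mul, !ev_mulL. reflexivity. }
  assert (GT : forall s t, closedT s t -> ev (dtL V0) s t = 0).
  { destruct j as [|j'].
    - intros; apply deg0_dt; auto.
    - set (Wt := [(1,O,1%nat); (-1,1%nat,1%nat); (-1,O,2%nat)] : list mono).
      set (P := mulL Wt (dtL V0)).
      assert (HP : degok (S (S j')) P).
      { apply (degok_mulL 2 j'). repeat apply degok_cons; try lia. apply degok_nil. apply degok_dtL; auto. }
      assert (EW : forall s t, ev Wt s t = t * (1 - s - t)) by (intros; simpl; ring).
      assert (E := EqT P HP).
      assert (B1 : Bbc (mulL V0 P) = 0).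
      { unfold Bbc. rewrite (RI_ext _ (fun _ => 0)). apply RI_zero.
        intros t _. unfold P. rewrite !ev_mulL, EW. ring. }
      assert (B2 : Bab (mulL V0 P) = 0).
      { unfold Bab. rewrite (RI_ext _ (fun _ => 0)). apply RI_zero.
        intros t _. unfold P. rewrite !ev_mulL, EW. ring. }
      assert (J1 : Jbc b c vb P = 0).
      { unfold Jbc. rewrite (RI_ext _ (fun _ => 0)). apply RI_zero.
        intros t _. unfold P. rewrite !ev_mulL, EW. ring. }
      assert (J2 : Jab a b vb P = 0).
      { unfold Jab. rewrite (RI_ext _ (fun _ => 0)). apply RI_zero.
        intros t _. unfold P. rewrite !ev_mulL, EW. ring. }
      rewrite B1, B2, J1, J2 in E.
      assert (Z0 : forall s t, openT s t -> ev (mulL (dtL V0) P) s t = 0).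
      { apply pos2. 2: lra.
        intros s t [H1 [H2 H3]]. unfold P. rewrite !ev_mulL, EW.
        assert (0 <= t * (1 - s - t)) by nra.
        replace (ev (dtL V0) s t * (t * (1 - s - t) * ev (dtL V0) s t)) with
          ((t * (1 - s - t)) * (ev (dtL V0) s t * ev (dtL V0) s t)) by ring.
        apply Rmult_le_pos; auto. apply Rle_0_sqr. }
      apply closure_zero. intros s t Hst. specialize (Z0 s t Hst).
      unfold P in Z0. rewrite !ev_mulL, EW in Z0. destruct Hst as [H1 [H2 H3]].
      assert (0 < t * (1 - s - t)) by nra.
      replace (ev (dtL V0) s t * (t * (1 - s - t) * ev (dtL V0) s t)) with
          ((t * (1 - s - t)) * (ev (dtL V0) s t * ev (dtL V0) s t)) in Z0 by ring.
      apply Rmult_integral in Z0. destruct Z0 as [Z0|Z0]; [lra|].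
      apply Rmult_integral in Z0. destruct Z0; auto. }
  assert (GS : forall s t, closedT s t -> ev (dsL V0) s t = 0).
  { destruct j as [|j'].
    - intros; apply deg0_ds; auto.
    - set (Wt := [(1,1%nat,O); (-1,2%nat,O); (-1,1%nat,1%nat)] : list mono).
      set (P := mulL Wt (dsL V0)).
      assert (HP : degok (S (S j')) P).
      { apply (degok_mulL 2 j'). repeat apply degok_cons; try lia. apply degok_nil. apply degok_dsL; auto. }
      assert (EW : forall s t, ev Wt s t = s * (1 - s - t)) by (intros; simpl; ring).
      assert (E := EqS P HP).
      assert (B1 : Bbc (mulL V0 P) = 0).
      { unfold Bbc. rewrite (RI_ext _ (fun _ => 0)). apply RI_zero.
        intros t _. unfold P. rewrite !ev_mulL, EW. ring. }
      assert (B2 : Bca (mulL V0 P) = 0).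
      { unfold Bca. rewrite (RI_ext _ (fun _ => 0)). apply RI_zero.
        intros t _. unfold P. rewrite !ev_mulL, EW. ring. }
      assert (J1 : Jbc b c vb P = 0).
      { unfold Jbc. rewrite (RI_ext _ (fun _ => 0)). apply RI_zero.
        intros t _. unfold P. rewrite !ev_mulL, EW. ring. }
      assert (J2 : Jca c a vb P = 0).
      { unfold Jca. rewrite (RI_ext _ (fun _ => 0)). apply RI_zero.
        intros t _. unfold P. rewrite !ev_mulL, EW. ring. }
      rewrite B1, B2, J1, J2 in E.
      assert (Z0 : forall s t, openT s t -> ev (mulL (dsL V0) P) s t = 0).
      { apply pos2. 2: lra.
        intros s t [H1 [H2 H3]]. unfold P. rewrite !ev_mulL, EW.
        assert (0 <= s * (1 - s - t)) by nra.
        replace (ev (dsL V0) s t * (s * (1 - s - t) * ev (dsL V0) s t)) with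
          ((s * (1 - s - t)) * (ev (dsL V0) s t * ev (dsL V0) s t)) by ring.
        apply Rmult_le_pos; auto. apply Rle_0_sqr. }
      apply closure_zero. intros s t Hst. specialize (Z0 s t Hst).
      unfold P in Z0. rewrite !ev_mulL, EW in Z0. destruct Hst as [H1 [H2 H3]].
      assert (0 < s * (1 - s - t)) by nra.
      replace (ev (dsL V0) s t * (s * (1 - s - t) * ev (dsL V0) s t)) with
          ((s * (1 - s - t)) * (ev (dsL V0) s t * ev (dsL V0) s t)) in Z0 by ring.
      apply Rmult_integral in Z0. destruct Z0 as [Z0|Z0]; [lra|].
      apply Rmult_integral in Z0. destruct Z0; auto. }
  set (C := ev V0 0 0).
  assert (HC : forall s t, closedT s t -> ev V0 s t = C).
  { intros s t [H1 [H2 H3]].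
    assert (A1 : ev V0 s t - ev V0 s 0 = 0).
    { rewrite <- ftc_t. rewrite (RI_ext _ (fun _ => 0)). apply RI_zero.
      intros u Hu. rewrite Rmin_left in Hu by lra. rewrite Rmax_right in Hu by lra.
      apply GT. unfold closedT; lra. }
    assert (A2 : ev V0 s 0 - ev V0 0 0 = 0).
    { rewrite <- ftc_s. rewrite (RI_ext _ (fun _ => 0)). apply RI_zero.
      intros u Hu. rewrite Rmin_left in Hu by lra. rewrite Rmax_right in Hu by lra.
      apply GS. unfold closedT; lra. }
    unfold C; lra. }
  set (Dab := (C,O,O) :: scaleL (-1) Lab).
  set (Dbc := (C,O,O) :: scaleL (-1) Lbc).
  set (Dca := (C,O,O) :: scaleL (-1) Lca).
  assert (HDab : degok (S j) Dab) by (apply degok_cons; [lia| apply degok_scaleL; auto]).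
  assert (HDbc : degok (S j) Dbc) by (apply degok_cons; [lia| apply degok_scaleL; auto]).
  assert (HDca : degok (S j) Dca) by (apply degok_cons; [lia| apply degok_scaleL; auto]).
  assert (EDab : forall t, ev Dab t 0 = C - ev Lab t 0) by (intros; unfold Dab; simpl; rewrite ev_scaleL; ring).
  assert (EDbc : forall t, ev Dbc t 0 = C - ev Lbc t 0) by (intros; unfold Dbc; simpl; rewrite ev_scaleL; ring).
  assert (EDca : forall t, ev Dca t 0 = C - ev Lca t 0) by (intros; unfold Dca; simpl; rewrite ev_scaleL; ring).
  set (Xab := fun P => RInt (fun t => ev Dab t 0 * ev P t 0) 0 1).
  set (Xbc := fun P => RInt (fun t => ev Dbc t 0 * ev P (1 - t) t) 0 1).
  set (Xca := fun P => RInt (fun t => ev Dca t 0 * ev P 0 (1 - t)) 0 1).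
  assert (XbcE : forall P, Bbc (mulL V0 P) - Jbc b c vb P = Xbc P).
  { intros P. unfold Bbc, Jbc, Xbc.
    rewrite (RI_ext (fun t => ev (mulL V0 P) (1 - t) t) (fun t => C * ev P (1 - t) t)).
    rewrite (RI_ext (fun t => vb (fst (lerp b c t)) (snd (lerp b c t)) * ev P (1 - t) t) (fun t => ev Lbc t 0 * ev P (1 - t) t)).
    rewrite <- RI_minus. apply RI_ext. intros t _. rewrite EDbc. ring.
    apply exR_c; intros; cont. apply exR_c; intros; cont.
    intros t Ht. rewrite Rmin_left in Ht by lra. rewrite Rmax_right in Ht by lra. rewrite Hbc; auto; lra.
    intros t Ht. rewrite Rmin_left in Ht by lra. rewrite Rmax_right in Ht by lra. rewrite ev_mulL, HC; auto.
    unfold closedT; lra. }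
  assert (XabE : forall P, Bab (mulL V0 P) - Jab a b vb P = Xab P).
  { intros P. unfold Bab, Jab, Xab.
    rewrite (RI_ext (fun t => ev (mulL V0 P) t 0) (fun t => C * ev P t 0)).
    rewrite (RI_ext (fun t => vb (fst (lerp a b t)) (snd (lerp a b t)) * ev P t 0) (fun t => ev Lab t 0 * ev P t 0)).
    rewrite <- RI_minus. apply RI_ext. intros t _. rewrite EDab. ring.
    apply exR_c; intros; cont. apply exR_c; intros; cont.
    intros t Ht. rewrite Rmin_left in Ht by lra. rewrite Rmax_right in Ht by lra. rewrite Hab; auto; lra.
    intros t Ht. rewrite Rmin_left in Ht by lra. rewrite Rmax_right in Ht by lra. rewrite ev_mulL, HC; auto.
    unfold closedT; lra. }
  assert (XcaE : forall P, Bca (mulL V0 P) - Jca c a vb P = Xca P).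
  { intros P. unfold Bca, Jca, Xca.
    rewrite (RI_ext (fun t => ev (mulL V0 P) 0 (1 - t)) (fun t => C * ev P 0 (1 - t))).
    rewrite (RI_ext (fun t => vb (fst (lerp c a t)) (snd (lerp c a t)) * ev P 0 (1 - t)) (fun t => ev Lca t 0 * ev P 0 (1 - t))).
    rewrite <- RI_minus. apply RI_ext. intros t _. rewrite EDca. ring.
    apply exR_c; intros; cont. apply exR_c; intros; cont.
    intros t Ht. rewrite Rmin_left in Ht by lra. rewrite Rmax_right in Ht by lra. rewrite Hca; auto; lra.
    intros t Ht. rewrite Rmin_left in Ht by lra. rewrite Rmax_right in Ht by lra. rewrite ev_mulL, HC; auto.
    unfold closedT; lra. }
  assert (XT : forall P, degok (S j) P -> Xbc P = Xab P).
  { intros P HP. assert (E := EqT P HP).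
    rewrite (DI_ext _ []) in E. rewrite DI_nil in E.
    rewrite <- XbcE, <- XabE. lra.
    intros s t Hs Ht. rewrite ev_mulL, GT. simpl; ring. unfold closedT; lra. }
  assert (XS : forall P, degok (S j) P -> Xbc P = Xca P).
  { intros P HP. assert (E := EqS P HP).
    rewrite (DI_ext _ []) in E. rewrite DI_nil in E.
    rewrite <- XbcE, <- XcaE. lra.
    intros s t Hs Ht. rewrite ev_mulL, GS. simpl; ring. unfold closedT; lra. }
  destruct (decomp j Dbc HDbc) as [d0 [E [HE HEv]]].
  set (P1 := [(d0, 1%nat, O)] : list mono).
  set (P2 := mulL [(1,O,1%nat)] (compL ((d0,O,O) :: E) [(1,O,1%nat)] [])).
  assert (HP1 : degok (S j) P1) by (apply degok_cons; [lia| apply degok_nil]).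
  assert (HP2 : degok (S j) P2).
  { apply (degok_mulL 1 j). apply degok_cons; [lia|apply degok_nil].
    apply degok_compL. apply degok_cons; [lia|auto]. apply degok_cons; [lia|apply degok_nil]. apply degok_nil. }
  assert (X1 : Xbc P1 = 0).
  { rewrite (XS P1 HP1). unfold Xca. rewrite (RI_ext _ (fun _ => 0)). apply RI_zero.
    intros t _. unfold P1; simpl; ring. }
  assert (X2 : Xbc P2 = 0).
  { rewrite (XT P2 HP2). unfold Xab. rewrite (RI_ext _ (fun _ => 0)). apply RI_zero.
    intros t _. unfold P2. rewrite ev_mulL. simpl; ring. }
  assert (ZDbc : forall t, 0 <= t <= 1 -> ev Dbc t 0 = 0).
  { assert (Sum : Xbc P1 + Xbc P2 = RInt (fun t => ev Dbc t 0 * ev Dbc t 0) 0 1).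
    2: { apply sq_int_zero. rewrite <- Sum, X1, X2. apply Rplus_0_r. }
    unfold Xbc. rewrite <- RI_plus.
    - apply RI_ext. intros t _. unfold P2. rewrite ev_mulL, ev_compL. unfold P1.
      rewrite HEv. simpl. replace (1 * 1 * (t * 1) + 0) with t by ring. ring.
    - apply exR_c; intros; cont.
    - apply exR_c; intros; cont. }
  assert (XbcZ : forall P, Xbc P = 0).
  { intros P. unfold Xbc. rewrite (RI_ext _ (fun _ => 0)). apply RI_zero.
    intros t Ht. rewrite Rmin_left in Ht by lra. rewrite Rmax_right in Ht by lra.
    rewrite ZDbc by lra. ring. }
  assert (ZDab : forall t, 0 <= t <= 1 -> ev Dab t 0 = 0).
  { apply sq_int_zero. transitivity (Xab Dab). reflexivity. rewrite <- (XT Dab HDab). apply XbcZ. }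
  set (P4 := compL Dca [(1,O,O); (-1,O,1%nat)] []).
  assert (HP4 : degok (S j) P4).
  { apply degok_compL; auto. repeat apply degok_cons; try lia. apply degok_nil. apply degok_nil. }
  assert (ZDca : forall t, 0 <= t <= 1 -> ev Dca t 0 = 0).
  { apply sq_int_zero. transitivity (Xca P4).
    { unfold Xca. apply RI_ext. intros t _. unfold P4. rewrite ev_compL. simpl.
      replace (1 * 1 * 1 + (-1 * 1 * ((1 - t) * 1) + 0)) with t by ring. replace (0 * 1 * 1 + 0) with 0 by ring. reflexivity. }
    rewrite <- (XS P4 HP4). apply XbcZ. }
  exists C. split; [exact HC|]. split; [|split].
  - intros t Ht. specialize (ZDab t Ht). rewrite EDab in ZDab. lra.
  - intros t Ht. specialize (ZDbc t Ht). rewrite EDbc in ZDbc. lra.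
  - intros t Ht. specialize (ZDca t Ht). rewrite EDca in ZDca. lra.
Qed.

Lemma backward a b c j v0 vb w1 w2 V0 W1 W2 C :
  Dt a b c <> 0 ->
  (forall s t, ev V0 s t = v0 (fst (tri_pt a b c s t)) (snd (tri_pt a b c s t))) ->
  (forall x y, w1 x y = ev W1 x y) -> degok (S j) W1 ->
  (forall x y, w2 x y = ev W2 x y) -> degok (S j) W2 ->
  edge_ok a b vb -> edge_ok b c vb -> edge_ok c a vb ->
  is_weak_grad j a b c v0 vb w1 w2 ->
  (forall s t, closedT s t -> ev V0 s t = C) ->
  (forall t, 0 <= t <= 1 -> vb (fst (lerp a b t)) (snd (lerp a b t)) = C) ->
  (forall t, 0 <= t <= 1 -> vb (fst (lerp b c t)) (snd (lerp b c t)) = C) ->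
  (forall t, 0 <= t <= 1 -> vb (fst (lerp c a t)) (snd (lerp c a t)) = C) ->
  forall s t, closedT s t ->
    w1 (fst (tri_pt a b c s t)) (snd (tri_pt a b c s t)) = 0 /\
    w2 (fst (tri_pt a b c s t)) (snd (tri_pt a b c s t)) = 0.
Proof.
  intros HD HV HW1 HdW1 HW2 HdW2 Eab Ebc Eca Hwg HC Cab Cbc Cca.
  assert (HDa : Rabs (Dt a b c) <> 0) by (apply Rabs_no_R0; auto).
  set (PE := fun ex ey => compL (scaleL ex W1 ++ scaleL ey W2) (FxL a b c) (FyL a b c)).
  assert (HPE : forall ex ey, degok (S j) (PE ex ey)).
  { intros. apply degok_compL; [| apply degok1_3 | apply degok1_3].
    apply degok_app; apply degok_scaleL; auto. }
  assert (EPE : forall ex ey s t, ev (PE ex ey) s t =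
     ex * w1 (fst (tri_pt a b c s t)) (snd (tri_pt a b c s t)) + ey * w2 (fst (tri_pt a b c s t)) (snd (tri_pt a b c s t))).
  { intros. unfold PE. rewrite ev_compL, ev_app, !ev_scaleL, ev_FxL, ev_FyL, HW1, HW2. reflexivity. }
  assert (LHS : forall ex ey, tri_int a b c (fun x y => w1 x y * (pfun a b c (PE ex ey) x y * ex) + w2 x y * (pfun a b c (PE ex ey) x y * ey))
     = Rabs (Dt a b c) * DI (mulL (PE ex ey) (PE ex ey))).
  { intros ex ey. apply tri_int_DI. intros s t _. rewrite pfun_F by exact HD. rewrite ev_mulL.
    transitivity (ev (PE ex ey) s t * (ex * w1 (fst (tri_pt a b c s t)) (snd (tri_pt a b c s t)) + ey * w2 (fst (tri_pt a b c s t)) (snd (tri_pt a b c s t)))).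
    ring. rewrite <- EPE. reflexivity. }
  assert (JC : forall P, Jab a b vb P = C * Bab P /\ Jbc b c vb P = C * Bbc P /\ Jca c a vb P = C * Bca P).
  { intros P. unfold Jab, Jbc, Jca, Bab, Bbc, Bca. repeat split.
    - rewrite <- RI_scal by (apply exR_c; intros; cont). apply RI_ext. intros t Ht.
      rewrite Rmin_left in Ht by lra. rewrite Rmax_right in Ht by lra. rewrite Cab; auto; lra.
    - rewrite <- RI_scal by (apply exR_c; intros; cont). apply RI_ext. intros t Ht.
      rewrite Rmin_left in Ht by lra. rewrite Rmax_right in Ht by lra. rewrite Cbc; auto; lra.
    - rewrite <- RI_scal by (apply exR_c; intros; cont). apply RI_ext. intros t Ht.
      rewrite Rmin_left in Ht by lra. rewrite Rmax_right in Ht by lra. rewrite Cca; auto; lra. }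
  assert (VC : forall Q, DI (mulL V0 Q) = C * DI Q).
  { intros Q. rewrite <- DI_scale. apply DI_ext. intros s t Hs Ht. rewrite ev_mulL, ev_scaleL, HC; auto.
    unfold closedT; lra. }
  assert (ZERO : forall ex ey, DI (mulL (PE ex ey) (PE ex ey)) = 0 ->
     forall s t, closedT s t -> ev (PE ex ey) s t = 0).
  { intros ex ey H0. apply closure_zero. intros s t Hst.
    assert (E := pos2 (mulL (PE ex ey) (PE ex ey))).
    assert (E2 : ev (mulL (PE ex ey) (PE ex ey)) s t = 0).
    { apply E; auto. intros; rewrite ev_mulL; apply Rle_0_sqr. }
    rewrite ev_mulL in E2. apply Rmult_integral in E2. destruct E2; auto. }
  assert (Z2 : forall s t, closedT s t -> ev (PE (fst c - fst a) (snd c - snd a)) s t = 0).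
  { apply ZERO. assert (E := master2 a b c j v0 vb w1 w2 V0 (PE (fst c - fst a) (snd c - snd a)) HD HV Eab Ebc Eca Hwg (HPE _ _)).
    rewrite LHS, VC, IBP_t in E. destruct (JC (PE (fst c - fst a) (snd c - snd a))) as [J1 [J2 J3]]. rewrite J1, J2 in E.
    apply Rmult_eq_reg_l with (Rabs (Dt a b c)); auto. rewrite E. ring. }
  assert (Z1 : forall s t, closedT s t -> ev (PE (fst b - fst a) (snd b - snd a)) s t = 0).
  { apply ZERO. assert (E := master1 a b c j v0 vb w1 w2 V0 (PE (fst b - fst a) (snd b - snd a)) HD HV Eab Ebc Eca Hwg (HPE _ _)).
    rewrite LHS, VC, IBP_s in E. destruct (JC (PE (fst b - fst a) (snd b - snd a))) as [J1 [J2 J3]]. rewrite J2, J3 in E.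
    apply Rmult_eq_reg_l with (Rabs (Dt a b c)); auto. rewrite E. ring. }
  intros s t Hst. specialize (Z1 s t Hst). specialize (Z2 s t Hst).
  rewrite EPE in Z1, Z2.
  set (e1x := fst b - fst a) in *. set (e1y := snd b - snd a) in *.
  set (e2x := fst c - fst a) in *. set (e2y := snd c - snd a) in *.
  set (u := w1 (fst (tri_pt a b c s t)) (snd (tri_pt a b c s t))) in *.
  set (v := w2 (fst (tri_pt a b c s t)) (snd (tri_pt a b c s t))) in *.
  assert (Hd : e1x * e2y - e1y * e2x <> 0).
  { unfold e1x, e1y, e2x, e2y. unfold Dt, det2, psub in HD. exact HD. }
  split.
  - apply (Rmult_eq_reg_l (e1x * e2y - e1y * e2x)); auto.
    replace ((e1x * e2y - e1y * e2x) * u) with (e2y * (e1x * u + e1y * v) - e1y * (e2x * u + e2y * v)) by ring.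
    rewrite Z1, Z2. ring.
  - apply (Rmult_eq_reg_l (e1x * e2y - e1y * e2x)); auto.
    replace ((e1x * e2y - e1y * e2x) * v) with (e1x * (e2x * u + e2y * v) - e2x * (e1x * u + e1y * v)) by ring.
    rewrite Z1, Z2. ring.
Qed.

Theorem lemma5p1 (a b c : pt) (j : nat) (v0 vb w1 w2 : R -> R -> R) :
  nondegenerate a b c ->
  poly2 j v0 ->
  bdry_poly (S j) vb a b c ->
  is_weak_grad j a b c v0 vb w1 w2 ->
  ((forall x y, in_tri a b c (x, y) -> w1 x y = 0 /\ w2 x y = 0) <->
   exists C : R, (forall x y, in_tri a b c (x, y) -> v0 x y = C) /\
                 (forall x y, on_bdry a b c (x, y) -> vb x y = C)).
Proof.
  intros HD0 Hv0 Hvb Hwg.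
  assert (HD : Dt a b c <> 0) by exact HD0.
  destruct (poly2_to_list j v0 Hv0) as [V0L [HV0L EV0]].
  set (V0 := compL V0L (FxL a b c) (FyL a b c)).
  assert (HV0 : degok j V0) by (apply degok_compL; auto; apply degok1_3).
  assert (HV : forall s t, ev V0 s t = v0 (fst (tri_pt a b c s t)) (snd (tri_pt a b c s t))).
  { intros. unfold V0. rewrite ev_compL, ev_FxL, ev_FyL, EV0. reflexivity. }
  destruct Hvb as [Pab [Pbc Pca]].
  destruct (poly1_to_list _ _ Pab) as [Lab [HLab Hab]].
  destruct (poly1_to_list _ _ Pbc) as [Lbc [HLbc Hbc]].
  destruct (poly1_to_list _ _ Pca) as [Lca [HLca Hca]].
  split.
  - intros Hw.
    destruct (forward a b c j v0 vb w1 w2 V0 Lab Lbc Lca HD HV HV0 Hab HLab Hbc HLbc Hca HLca Hwg Hw)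
      as [C [HC [Cab [Cbc Cca]]]].
    exists C. split.
    + intros x y [s [t [Hs [Ht [Hst Exy]]]]].
      assert (Ex : x = fst (tri_pt a b c s t)) by (rewrite <- Exy; reflexivity).
      assert (Ey : y = snd (tri_pt a b c s t)) by (rewrite <- Exy; reflexivity).
      rewrite Ex, Ey, <- HV. apply HC. unfold closedT; lra.
    + intros x y [[t [Ht Exy]]|[[t [Ht Exy]]|[t [Ht Exy]]]].
      * assert (Ex : x = fst (lerp a b t)) by (rewrite <- Exy; reflexivity).
        assert (Ey : y = snd (lerp a b t)) by (rewrite <- Exy; reflexivity).
        rewrite Ex, Ey, Hab; auto.
      * assert (Ex : x = fst (lerp b c t)) by (rewrite <- Exy; reflexivity).
        assert (Ey : y = snd (lerp b c t)) by (rewrite <- Exy; reflexivity).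
        rewrite Ex, Ey, Hbc; auto.
      * assert (Ex : x = fst (lerp c a t)) by (rewrite <- Exy; reflexivity).
        assert (Ey : y = snd (lerp c a t)) by (rewrite <- Exy; reflexivity).
        rewrite Ex, Ey, Hca; auto.
  - intros [C [HvC HbC]] x y [s [t [Hs [Ht [Hst Exy]]]]].
    assert (Ex : x = fst (tri_pt a b c s t)) by (rewrite <- Exy; reflexivity).
    assert (Ey : y = snd (tri_pt a b c s t)) by (rewrite <- Exy; reflexivity).
    rewrite Ex, Ey.
    destruct Hwg as [Pw1 [Pw2 Hw3]].
    destruct (poly2_to_list _ _ Pw1) as [W1 [HdW1 HW1]].
    destruct (poly2_to_list _ _ Pw2) as [W2 [HdW2 HW2]].
    apply (backward a b c j v0 vb w1 w2 V0 W1 W2 C HD HV HW1 HdW1 HW2 HdW2).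
    + exists Lab; auto.
    + exists Lbc; auto.
    + exists Lca; auto.
    + split; [auto|split; auto].
    + intros s' t' Hst'. rewrite HV. apply HvC. apply closedT_in_tri; auto.
    + intros t' Ht'. apply HbC. left. exists t'. split; [auto| symmetry; apply surjective_pairing].
    + intros t' Ht'. apply HbC. right; left. exists t'. split; [auto| symmetry; apply surjective_pairing].
    + intros t' Ht'. apply HbC. right; right. exists t'. split; [auto| symmetry; apply surjective_pairing].
    + unfold closedT; lra.
Qed.
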